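(* Let $\mathbb{A}$ be a 2-category and $(\mathfrak{l}\dashv\mathfrak{p},\varepsilon,\eta):\mathfrak{b}\to\mathfrak{e}$ an adjunction in $\mathbb{A}$ (so $\mathfrak{l}:\mathfrak{b}\to\mathfrak{e}$, $\mathfrak{p}:\mathfrak{e}\to\mathfrak{b}$). Then: (1) if $\mathbb{A}$ has the two-dimensional cokernel diagram of $\mathfrak{p}$, the semantic lax descent factorization of $\mathfrak{p}$ is isomorphic to the usual factorization of $\mathfrak{p}$ through the Eilenberg–Moore object of the monad $(\mathfrak{b},\mathfrak{p}\mathfrak{l},\mathrm{id}_{\mathfrak{p}}\ast\varepsilon\ast\mathrm{id}_{\mathfrak{l}},\eta)$, either one existing if the other does; (2) if $\mathbb{A}$ has the two-dimensional kernel diagram of $\mathfrak{l}$, the semantic lax codescent factorization of $\mathfrak{l}$ is isomorphic to the usual factorization of $\mathfrak{l}$ through the Kleisli object of that monad, either one existing if the other does; (3) if $\mathbb{A}$ has the two-dimensional cokernel diagram of $\mathfrak{l}$, the semantic lax descent factorization of $\mathfrak{l}$ is isomorphic to the usual factorization of $\mathfrak{l}$ through the co-Eilenberg–Moore object of the comonad $(\mathfrak{e},\mathfrak{l}\mathfrak{p},\mathrm{id}_{\mathfrak{l}}\ast\eta\ast\mathrm{id}_{\mathfrak{p}},\varepsilon)$, either one existing if the other does; (4) if $\mathbb{A}$ has the two-dimensional kernel diagram of $\mathfrak{p}$, the semantic lax codescent factorization of $\mathfrak{p}$ is isomorphic to the usual factorization of $\mathfrak{p}$ through the co-Kleisli object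 of that comonad, either one existing if the other does.
   Context: A 2-category is a $\mathbf{Cat}$-enriched category; composition of 1-cells is juxtaposition, vertical composition of 2-cells is $\cdot$, horizontal composition is $\ast$, $\mathrm{id}_f$ is the identity 2-cell on $f$. An adjunction $(\mathfrak{l}\dashv\mathfrak{p},\varepsilon:\mathfrak{l}\mathfrak{p}\Rightarrow\mathrm{id}_{\mathfrak{e}},\eta:\mathrm{id}_{\mathfrak{b}}\Rightarrow\mathfrak{p}\mathfrak{l})$ satisfies the triangle identities. $\mathbb{A}^{\mathrm{op}}$, $\mathbb{A}^{\mathrm{co}}$, $\mathbb{A}^{\mathrm{coop}}$ are obtained from $\mathbb{A}$ by reversing 1-cells, 2-cells, or both. For a 1-cell $p:e\to b$: an opcomma object of $p$ along itself is $b\uparrow_p b$ with $\delta^0,\delta^1:b\to b\uparrow_pb$ and $\alpha:\delta^1p\Rightarrow\delta^0p$ such that for every $y$, $h\mapsto(h\delta^0,h\delta^1,\mathrm{id}_h\ast\alpha)$, $\xi\mapsto(\xi\ast\mathrm{id}_{\delta^0},\xi\ast\mathrm{id}_{\delta^1})$ is an isomorphism from $\mathbb{A}(b\uparrow_pb,y)$ onto the category of triples $(h_0,h_1:b\to y,\beta:h_1p\Rightarrow h_0p)$ with morphisms pairs $(\xi_0,\xi_1)$ with $(\xi_0\ast\mathrm{id}_p)\cdot\beta=\beta'\cdot(\xi_1\ast\mathrm{id}_p)$. A two-dimensional pushout of a span $f_0:c\to c_0$, $f_1:c\to c_1$ is $P$ with $q_0,q_1$, $q_0f_0=q_1f_1$,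 such that $k\mapsto(kq_0,kq_1)$ is an isomorphism from $\mathbb{A}(P,y)$ onto the category of pairs $(k_0,k_1)$ with $k_0f_0=k_1f_1$ and morphisms pairs of 2-cells $(\xi_0,\xi_1)$ with $\xi_0\ast\mathrm{id}_{f_0}=\xi_1\ast\mathrm{id}_{f_1}$. $\mathbb{A}$ has the two-dimensional cokernel diagram of $p$ if it has $b\uparrow_pb$ and a two-dimensional pushout $b\uparrow_pb\uparrow_pb$ of $(\delta^0,\delta^1)$ with $D^0,D^2$, $D^2\delta^0=D^0\delta^1$; $D^1$ is the unique 1-cell with $D^1\delta^1=D^2\delta^1$, $D^1\delta^0=D^0\delta^0$, $\mathrm{id}_{D^1}\ast\alpha=(\mathrm{id}_{D^0}\ast\alpha)\cdot(\mathrm{id}_{D^2}\ast\alpha)$; $s^0$ is the unique 1-cell with $s^0\delta^0=s^0\delta^1=\mathrm{id}_b$, $\mathrm{id}_{s^0}\ast\alpha=\mathrm{id}_p$. Semantic lax descent factorization of $p$: $\mathrm{Desc}_p(y)$ has objects $(h:y\to b,\beta:\delta^1h\Rightarrow\delta^0h)$ with $(\mathrm{id}_{D^0}\ast\beta)\cdot(\mathrm{id}_{D^2}\ast\beta)=\mathrm{id}_{D^1}\ast\beta$, $\mathrm{id}_{s^0}\ast\beta=\mathrm{id}_h$, and morphisms 2-cells $\xi:h_1\Rightarrow h_0$ with $\beta_0\cdot(\mathrm{id}_{\delta^1}\ast\xi)=(\mathrm{id}_{\delta^0}\ast\xi)\cdot\beta_1$; a lax descent object is $L$ with $d:L\to b$,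 $\Psi:\delta^1d\Rightarrow\delta^0d$ such that $g\mapsto(dg,\Psi\ast\mathrm{id}_g)$, $\xi\mapsto\mathrm{id}_d\ast\xi$ is an isomorphism $\mathbb{A}(y,L)\cong\mathrm{Desc}_p(y)$ for all $y$; the factorization is $p=d\,p^H$ with $p^H$ unique such that $dp^H=p$ and $\Psi\ast\mathrm{id}_{p^H}=\alpha$. An Eilenberg–Moore object of a monad $(b,t,m,\eta)$ is $b^{\mathsf{T}}$ with $u:b^{\mathsf{T}}\to b$, $\mu:tu\Rightarrow u$ such that $g\mapsto(ug,\mu\ast\mathrm{id}_g)$ is an isomorphism from $\mathbb{A}(y,b^{\mathsf{T}})$ onto the category of pairs $(h,\beta:th\Rightarrow h)$ with $\beta\cdot(\mathrm{id}_t\ast\beta)=\beta\cdot(m\ast\mathrm{id}_h)$, $\beta\cdot(\eta\ast\mathrm{id}_h)=\mathrm{id}_h$ (morphisms $\xi$ with $\xi\cdot\beta_1=\beta_0\cdot(\mathrm{id}_t\ast\xi)$). The usual factorization of the right adjoint $\mathfrak{p}$ through the Eilenberg–Moore object of the induced monad is $\mathfrak{p}=u\,k$ with $k:\mathfrak{e}\to\mathfrak{b}^{\mathsf{T}}$ unique such that $uk=\mathfrak{p}$ and $\mu\ast\mathrm{id}_k=\mathrm{id}_{\mathfrak{p}}\ast\varepsilon$. Duals: the two-dimensional kernel diagram of a 1-cell in $\mathbb{A}$ is its two-dimensional cokernel diagram in $\mathbb{A}^{\mathrm{op}}$, and its semantic lax codescent factorization is its semantic lax descent factorization in $\mathbb{A}^{\mathrm{op}}$.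 The usual factorization of $\mathfrak{l}$ through the Kleisli object, of $\mathfrak{l}$ through the co-Eilenberg–Moore object, and of $\mathfrak{p}$ through the co-Kleisli object are respectively the usual Eilenberg–Moore factorization of the right adjoint $\mathfrak{l}$ in $\mathbb{A}^{\mathrm{op}}$, of the right adjoint $\mathfrak{l}$ in $\mathbb{A}^{\mathrm{co}}$, and of the right adjoint $\mathfrak{p}$ in $\mathbb{A}^{\mathrm{coop}}$. Two factorizations $f=ac$ (through $X$) and $f=a'c'$ (through $X'$) are isomorphic if there is an isomorphism $\varphi:X\to X'$ with $a'\varphi=a$ and $\varphi c=c'$. *)

(* Defs.v *)
Record TwoCatData : Type := {
  Ob : Type;
  hom : Ob -> Ob -> Type;
  cell : forall a b : Ob, hom a b -> hom a b -> Type;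
  id1 : forall a : Ob, hom a a;
  comp1 : forall a b c : Ob, hom b c -> hom a b -> hom a c; (* comp1 g f = "g f" *)
  id2 : forall (a b : Ob) (f : hom a b), cell a b f f;
  vcomp : forall (a b : Ob) (f g h : hom a b),              (* vcomp x y = "x . y" *)
      cell a b g h -> cell a b f g -> cell a b f h;
  hcomp : forall (a b c : Ob) (g g' : hom b c) (f f' : hom a b),
      cell b c g g' -> cell a b f f' -> cell a c (comp1 a b c g f) (comp1 a b c g' f')
}.

Arguments hom {t} a b : rename.
Arguments cell {t a b} f g : rename.
Arguments id1 {t} a : rename.
Arguments comp1 {t a b c} g f : rename.
Arguments id2 {t a b} f : rename.
Arguments vcomp {t a b f g h} x y : rename.
Arguments hcomp {t a b c g g' f f'} x y : rename.

(* Equality of 2-cells whose boundary 1-cells are (propositionally) equal: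
   the boundaries coincide and the cells coincide after transport. *)
Definition heq2 {C : TwoCatData} {a b : Ob C} {f g f' g' : hom a b}
    (x : cell f g) (y : cell f' g') : Prop :=
  existT (fun st : hom a b * hom a b => cell (fst st) (snd st)) (f, g) x
  = existT (fun st : hom a b * hom a b => cell (fst st) (snd st)) (f', g') y.

(* "w = x . y" where the middle boundaries of x and y agree up to equality of
   1-cells (needed because associativity of 1-cells is only propositional). *)
Definition veq {C : TwoCatData} {a b : Ob C} {f1 g1 f2 g2 f3 g3 : hom a b}
    (w : cell f1 g1) (x : cell f2 g2) (y : cell f3 g3) : Prop :=
  exists (m : hom a b) (x' : cell m g2) (y' : cell f3 m),
    heq2 x x' /\ heq2 y y' /\ heq2 w (vcomp x' y').

Record TwoCatAxioms (C : TwoCatData) : Prop := {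
  ax_assoc : forall (a b c d : Ob C) (h : hom c d) (g : hom b c) (f : hom a b),
      comp1 h (comp1 g f) = comp1 (comp1 h g) f;
  ax_idl : forall (a b : Ob C) (f : hom a b), comp1 (id1 b) f = f;
  ax_idr : forall (a b : Ob C) (f : hom a b), comp1 f (id1 a) = f;
  ax_vassoc : forall (a b : Ob C) (f g h k : hom a b)
      (x : cell h k) (y : cell g h) (z : cell f g),
      vcomp x (vcomp y z) = vcomp (vcomp x y) z;
  ax_vidl : forall (a b : Ob C) (f g : hom a b) (x : cell f g), vcomp (id2 g) x = x;
  ax_vidr : forall (a b : Ob C) (f g : hom a b) (x : cell f g), vcomp x (id2 f) = x;
  ax_interchange : forall (a b c : Ob C) (g g' g'' : hom b c) (f f' f'' : hom a b)
      (x : cell g g') (x' : cell g' g'') (y : cell f f') (y' : cell f' f''),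
      hcomp (vcomp x' x) (vcomp y' y) = vcomp (hcomp x' y') (hcomp x y);
  ax_hid : forall (a b c : Ob C) (g : hom b c) (f : hom a b),
      hcomp (id2 g) (id2 f) = id2 (comp1 g f);
  ax_hassoc : forall (a b c d : Ob C) (h h' : hom c d) (g g' : hom b c) (f f' : hom a b)
      (x : cell h h') (y : cell g g') (z : cell f f'),
      heq2 (hcomp x (hcomp y z)) (hcomp (hcomp x y) z);
  ax_hidl : forall (a b : Ob C) (f f' : hom a b) (x : cell f f'),
      heq2 (hcomp (id2 (id1 b)) x) x;
  ax_hidr : forall (a b : Ob C) (f f' : hom a b) (x : cell f f'),
      heq2 (hcomp x (id2 (id1 a))) x
}.

Record TwoCat : Type := { tc :> TwoCatData; tc_ax : TwoCatAxioms tc }.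

Definition c1_assoc {C : TwoCat} {a b c d : Ob C} (h : hom c d) (g : hom b c) (f : hom a b)
  : comp1 h (comp1 g f) = comp1 (comp1 h g) f := @ax_assoc _ (tc_ax C) _ _ _ _ h g f.
Definition c1_idr {C : TwoCat} {a b : Ob C} (f : hom a b) : comp1 f (id1 a) = f :=
  @ax_idr _ (tc_ax C) _ _ f.

Definition cast2 {C : TwoCatData} {a b : Ob C} {f f' g g' : hom a b}
    (e1 : f = f') (e2 : g = g') (x : cell f g) : cell f' g' :=
  match e1 in _ = f1, e2 in _ = g1 return cell f1 g1 with eq_refl, eq_refl => x end.

Definition op_data (C : TwoCatData) : TwoCatData := {|
  Ob := Ob C;
  hom := fun a b => @hom C b a;
  cell := fun a b f g => @cell C b a f g;
  id1 := fun a => @id1 C a;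
  comp1 := fun a b c g f => comp1 f g;
  id2 := fun a b f => id2 f;
  vcomp := fun a b f g h x y => vcomp x y;
  hcomp := fun a b c g g' f f' x y => hcomp y x |}.

Definition co_data (C : TwoCatData) : TwoCatData := {|
  Ob := Ob C;
  hom := fun a b => @hom C a b;
  cell := fun a b f g => @cell C a b g f;
  id1 := fun a => @id1 C a;
  comp1 := fun a b c g f => comp1 g f;
  id2 := fun a b f => id2 f;
  vcomp := fun a b f g h x y => vcomp y x;
  hcomp := fun a b c g g' f f' x y => hcomp x y |}.

Lemma heq2_co (C : TwoCatData) (a b : Ob C) (f g f' g' : hom a b)
    (x : cell g f) (y : cell g' f') :
  heq2 x y -> @heq2 (co_data C) a b f g f' g' x y.
Proof.
  unfold heq2; intro H.
  exact (f_equal (fun s => existT (fun st : hom a b * hom a b => cell (snd st) (fst st))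
                     (snd (projT1 s), fst (projT1 s)) (projT2 s)) H).
Qed.

Lemma veq_co (C : TwoCatData) (a b : Ob C) (f1 g1 f2 g2 f3 g3 : hom a b)
    (w : cell g1 f1) (x : cell g2 f2) (y : cell g3 f3) :
  veq w y x -> @veq (co_data C) a b f1 g1 f2 g2 f3 g3 w x y.
Proof.
  intros [m [y' [x' [H1 [H2 H3]]]]].
  exists m, x', y'.
  split; [|split].
  - exact (heq2_co C a b _ _ _ _ x x' H2).
  - exact (heq2_co C a b _ _ _ _ y y' H1).
  - exact (heq2_co C a b _ _ _ _ w (vcomp y' x') H3).
Qed.

Lemma op_ax (C : TwoCat) : TwoCatAxioms (op_data C).
Proof.
  destruct C as [C H]; simpl.
  constructor; intros; simpl.
  - symmetry; apply (ax_assoc _ H).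
  - apply (ax_idr _ H).
  - apply (ax_idl _ H).
  - apply (ax_vassoc _ H).
  - apply (ax_vidl _ H).
  - apply (ax_vidr _ H).
  - apply (ax_interchange _ H).
  - apply (ax_hid _ H).
  - unfold heq2; simpl; symmetry; apply (ax_hassoc _ H).
  - apply (ax_hidr _ H).
  - apply (ax_hidl _ H).
Qed.

Lemma co_ax (C : TwoCat) : TwoCatAxioms (co_data C).
Proof.
  destruct C as [C H]; simpl.
  constructor; intros; simpl.
  - apply (ax_assoc _ H).
  - apply (ax_idl _ H).
  - apply (ax_idr _ H).
  - symmetry; apply (ax_vassoc _ H).
  - apply (ax_vidr _ H).
  - apply (ax_vidl _ H).
  - apply (ax_interchange _ H).
  - apply (ax_hid _ H).
  - apply heq2_co; apply (ax_hassoc _ H).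
  - apply heq2_co; apply (ax_hidl _ H).
  - apply heq2_co; apply (ax_hidr _ H).
Qed.

Definition op (C : TwoCat) : TwoCat := {| tc := op_data C; tc_ax := op_ax C |}.
Definition co (C : TwoCat) : TwoCat := {| tc := co_data C; tc_ax := co_ax C |}.
Definition coop (C : TwoCat) : TwoCat := co (op C).

Record Adjunction (C : TwoCat) (b e : Ob C) : Type := {
  adj_l : hom b e;
  adj_p : hom e b;
  adj_eps : cell (comp1 adj_l adj_p) (id1 e);
  adj_eta : cell (id1 b) (comp1 adj_p adj_l);
  adj_tri_l : veq (id2 adj_l) (hcomp adj_eps (id2 adj_l)) (hcomp (id2 adj_l) adj_eta);
  adj_tri_p : veq (id2 adj_p) (hcomp (id2 adj_p) adj_eps) (hcomp adj_eta (id2 adj_p))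
}.
Arguments adj_l {C b e} _.
Arguments adj_p {C b e} _.
Arguments adj_eps {C b e} _.
Arguments adj_eta {C b e} _.
Arguments adj_tri_l {C b e} _.
Arguments adj_tri_p {C b e} _.

Definition adj_op {C : TwoCat} {b e : Ob C} (X : Adjunction C b e) : Adjunction (op C) b e :=
  @Build_Adjunction (op C) b e (adj_p X) (adj_l X) (adj_eps X) (adj_eta X)
     (adj_tri_p X) (adj_tri_l X).

Definition adj_co {C : TwoCat} {b e : Ob C} (X : Adjunction C b e) : Adjunction (co C) e b :=
  @Build_Adjunction (co C) e b (adj_p X) (adj_l X) (adj_eta X) (adj_eps X)
     (veq_co C _ _ _ _ _ _ _ _ _ _ _ (adj_tri_p X))
     (veq_co C _ _ _ _ _ _ _ _ _ _ _ (adj_tri_l X)).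

Definition adj_coop {C : TwoCat} {b e : Ob C} (X : Adjunction C b e) : Adjunction (coop C) e b :=
  adj_co (adj_op X).

Definition oc_beta {C : TwoCat} {e b o y : Ob C} (p : hom e b) (d0 d1 : hom b o)
    (alpha : cell (comp1 d1 p) (comp1 d0 p)) (h : hom o y)
  : cell (comp1 (comp1 h d1) p) (comp1 (comp1 h d0) p) :=
  cast2 (c1_assoc h d1 p) (c1_assoc h d0 p) (hcomp (id2 h) alpha).

Definition oc_triple {C : TwoCat} {e b o y : Ob C} (p : hom e b) (d0 d1 : hom b o)
    (alpha : cell (comp1 d1 p) (comp1 d0 p)) (h : hom o y)
  : { h0 : hom b y & { h1 : hom b y & cell (comp1 h1 p) (comp1 h0 p) } } :=
  existT _ (comp1 h d0) (existT _ (comp1 h d1) (oc_beta p d0 d1 alpha h)).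

(* h |-> (h d0, h d1, id_h * alpha), xi |-> (xi * id_d0, xi * id_d1) is an
   isomorphism of categories A(o, y) ~= triples, for every y:
   bijective on objects, and bijective on each hom-set (fully faithful). *)
Definition IsOpcomma {C : TwoCat} {e b o : Ob C} (p : hom e b) (d0 d1 : hom b o)
    (alpha : cell (comp1 d1 p) (comp1 d0 p)) : Prop :=
  (forall (y : Ob C) (h0 h1 : hom b y) (beta : cell (comp1 h1 p) (comp1 h0 p)),
      exists! h : hom o y, oc_triple p d0 d1 alpha h = existT _ h0 (existT _ h1 beta)) /\
  (forall (y : Ob C) (h h' : hom o y)
      (xi0 : cell (comp1 h d0) (comp1 h' d0)) (xi1 : cell (comp1 h d1) (comp1 h' d1)),
      vcomp (hcomp xi0 (id2 p)) (oc_beta p d0 d1 alpha h)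
        = vcomp (oc_beta p d0 d1 alpha h') (hcomp xi1 (id2 p)) ->
      exists! xi : cell h h', hcomp xi (id2 d0) = xi0 /\ hcomp xi (id2 d1) = xi1).

Definition IsPushout2 {C : TwoCat} {c c0 c1 P : Ob C} (f0 : hom c c0) (f1 : hom c c1)
    (q0 : hom c0 P) (q1 : hom c1 P) : Prop :=
  comp1 q0 f0 = comp1 q1 f1 /\
  (forall (y : Ob C) (k0 : hom c0 y) (k1 : hom c1 y),
      comp1 k0 f0 = comp1 k1 f1 ->
      exists! k : hom P y, comp1 k q0 = k0 /\ comp1 k q1 = k1) /\
  (forall (y : Ob C) (k k' : hom P y)
      (xi0 : cell (comp1 k q0) (comp1 k' q0)) (xi1 : cell (comp1 k q1) (comp1 k' q1)),
      heq2 (hcomp xi0 (id2 f0)) (hcomp xi1 (id2 f1)) ->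
      exists! xi : cell k k', hcomp xi (id2 q0) = xi0 /\ hcomp xi (id2 q1) = xi1).

Record CokernelDiagram {C : TwoCat} {e b : Ob C} (p : hom e b) : Type := {
  ck_O : Ob C;
  ck_d0 : hom b ck_O;
  ck_d1 : hom b ck_O;
  ck_alpha : cell (comp1 ck_d1 p) (comp1 ck_d0 p);
  ck_opcomma : IsOpcomma p ck_d0 ck_d1 ck_alpha;
  ck_P : Ob C;
  ck_D0 : hom ck_O ck_P;
  ck_D2 : hom ck_O ck_P;
  ck_pushout : IsPushout2 ck_d0 ck_d1 ck_D2 ck_D0;
  ck_D1 : hom ck_O ck_P;
  ck_D1_d1 : comp1 ck_D1 ck_d1 = comp1 ck_D2 ck_d1;
  ck_D1_d0 : comp1 ck_D1 ck_d0 = comp1 ck_D0 ck_d0;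
  ck_D1_alpha : veq (hcomp (id2 ck_D1) ck_alpha)
                    (hcomp (id2 ck_D0) ck_alpha) (hcomp (id2 ck_D2) ck_alpha);
  ck_s0 : hom ck_O b;
  ck_s0_d0 : comp1 ck_s0 ck_d0 = id1 b;
  ck_s0_d1 : comp1 ck_s0 ck_d1 = id1 b;
  ck_s0_alpha : heq2 (hcomp (id2 ck_s0) ck_alpha) (id2 p)
}.
Arguments ck_O {C e b p} _.
Arguments ck_d0 {C e b p} _.
Arguments ck_d1 {C e b p} _.
Arguments ck_alpha {C e b p} _.
Arguments ck_P {C e b p} _.
Arguments ck_D0 {C e b p} _.
Arguments ck_D1 {C e b p} _.
Arguments ck_D2 {C e b p} _.
Arguments ck_s0 {C e b p} _.

Definition KernelDiagram {C : TwoCat} {x y : Ob C} (f : hom x y) : Type :=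
  @CokernelDiagram (op C) y x f.

Definition DescObj {C : TwoCat} {e b : Ob C} {p : hom e b} (K : CokernelDiagram p)
    {y : Ob C} (h : hom y b) (beta : cell (comp1 (ck_d1 K) h) (comp1 (ck_d0 K) h)) : Prop :=
  veq (hcomp (id2 (ck_D1 K)) beta) (hcomp (id2 (ck_D0 K)) beta) (hcomp (id2 (ck_D2 K)) beta)
  /\ heq2 (hcomp (id2 (ck_s0 K)) beta) (id2 h).

Definition DescMor {C : TwoCat} {e b : Ob C} {p : hom e b} (K : CokernelDiagram p)
    {y : Ob C} {h0 h1 : hom y b}
    (beta0 : cell (comp1 (ck_d1 K) h0) (comp1 (ck_d0 K) h0))
    (beta1 : cell (comp1 (ck_d1 K) h1) (comp1 (ck_d0 K) h1)) (xi : cell h1 h0) : Prop :=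
  vcomp beta0 (hcomp (id2 (ck_d1 K)) xi) = vcomp (hcomp (id2 (ck_d0 K)) xi) beta1.

Definition ld_beta {C : TwoCat} {e b : Ob C} {p : hom e b} (K : CokernelDiagram p)
    {L y : Ob C} (d : hom L b) (Psi : cell (comp1 (ck_d1 K) d) (comp1 (ck_d0 K) d))
    (g : hom y L) : cell (comp1 (ck_d1 K) (comp1 d g)) (comp1 (ck_d0 K) (comp1 d g)) :=
  cast2 (eq_sym (c1_assoc (ck_d1 K) d g)) (eq_sym (c1_assoc (ck_d0 K) d g)) (hcomp Psi (id2 g)).

(* (L, d, Psi) is a lax descent object: g |-> (d g, Psi * id_g), xi |-> id_d * xi
   is an isomorphism of categories A(y, L) ~= Desc_p(y) for all y. *)
Definition IsLaxDescObj {C : TwoCat} {e b : Ob C} {p : hom e b} (K : CokernelDiagram p)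
    {L : Ob C} (d : hom L b) (Psi : cell (comp1 (ck_d1 K) d) (comp1 (ck_d0 K) d)) : Prop :=
  (forall (y : Ob C) (g : hom y L), DescObj K (comp1 d g) (ld_beta K d Psi g)) /\
  (forall (y : Ob C) (h : hom y b) (beta : cell (comp1 (ck_d1 K) h) (comp1 (ck_d0 K) h)),
      DescObj K h beta ->
      exists! g : hom y L,
        existT (fun h' : hom y b => cell (comp1 (ck_d1 K) h') (comp1 (ck_d0 K) h'))
               (comp1 d g) (ld_beta K d Psi g)
        = existT (fun h' : hom y b => cell (comp1 (ck_d1 K) h') (comp1 (ck_d0 K) h')) h beta) /\
  (forall (y : Ob C) (g g' : hom y L) (m : cell (comp1 d g) (comp1 d g')),
      DescMor K (ld_beta K d Psi g') (ld_beta K d Psi g) m ->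
      exists! xi : cell g g', hcomp (id2 d) xi = m).

Record LaxDescFact {C : TwoCat} {e b : Ob C} {p : hom e b} (K : CokernelDiagram p) : Type := {
  ldf_L : Ob C;
  ldf_d : hom ldf_L b;
  ldf_Psi : cell (comp1 (ck_d1 K) ldf_d) (comp1 (ck_d0 K) ldf_d);
  ldf_is : IsLaxDescObj K ldf_d ldf_Psi;
  ldf_pH : hom e ldf_L;
  ldf_fact : comp1 ldf_d ldf_pH = p;
  ldf_Psi_pH : heq2 (hcomp ldf_Psi (id2 ldf_pH)) (ck_alpha K)
}.
Arguments ldf_L {C e b p K} _.
Arguments ldf_d {C e b p K} _.
Arguments ldf_pH {C e b p K} _.

Definition LaxCodescFact {C : TwoCat} {x y : Ob C} {f : hom x y} (K : KernelDiagram f) : Type :=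
  @LaxDescFact (op C) y x f K.

Definition AlgObj {C : TwoCat} {b : Ob C} (t : hom b b) (m : cell (comp1 t t) t)
    (eta : cell (id1 b) t) {y : Ob C} (h : hom y b) (beta : cell (comp1 t h) h) : Prop :=
  heq2 (vcomp beta (hcomp (id2 t) beta)) (vcomp beta (hcomp m (id2 h))) /\
  heq2 (vcomp beta (hcomp eta (id2 h))) (id2 h).

Definition AlgMor {C : TwoCat} {b : Ob C} (t : hom b b) {y : Ob C} {h0 h1 : hom y b}
    (beta0 : cell (comp1 t h0) h0) (beta1 : cell (comp1 t h1) h1) (xi : cell h1 h0) : Prop :=
  vcomp xi beta1 = vcomp beta0 (hcomp (id2 t) xi).

Definition em_beta {C : TwoCat} {b X y : Ob C} (t : hom b b) (u : hom X b)
    (mu : cell (comp1 t u) u) (g : hom y X) : cell (comp1 t (comp1 u g)) (comp1 u g) :=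
  cast2 (eq_sym (c1_assoc t u g)) eq_refl (hcomp mu (id2 g)).

Definition IsEMObj {C : TwoCat} {b : Ob C} (t : hom b b) (m : cell (comp1 t t) t)
    (eta : cell (id1 b) t) {X : Ob C} (u : hom X b) (mu : cell (comp1 t u) u) : Prop :=
  (forall (y : Ob C) (g : hom y X), AlgObj t m eta (comp1 u g) (em_beta t u mu g)) /\
  (forall (y : Ob C) (h : hom y b) (beta : cell (comp1 t h) h),
      AlgObj t m eta h beta ->
      exists! g : hom y X,
        existT (fun h' : hom y b => cell (comp1 t h') h') (comp1 u g) (em_beta t u mu g)
        = existT (fun h' : hom y b => cell (comp1 t h') h') h beta) /\
  (forall (y : Ob C) (g g' : hom y X) (m' : cell (comp1 u g) (comp1 u g')),
      AlgMor t (em_beta t u mu g') (em_beta t u mu g) m' ->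
      exists! xi : cell g g', hcomp (id2 u) xi = m').

Definition adj_T {C : TwoCat} {b e : Ob C} (X : Adjunction C b e) : hom b b :=
  comp1 (adj_p X) (adj_l X).

Definition adj_mult {C : TwoCat} {b e : Ob C} (X : Adjunction C b e)
  : cell (comp1 (adj_T X) (adj_T X)) (adj_T X) :=
  cast2 (eq_trans (f_equal (fun z => comp1 z (adj_l X)) (c1_assoc (adj_p X) (adj_l X) (adj_p X)))
                  (eq_sym (c1_assoc (comp1 (adj_p X) (adj_l X)) (adj_p X) (adj_l X))))
        (f_equal (fun z => comp1 z (adj_l X)) (c1_idr (adj_p X)))
        (hcomp (hcomp (id2 (adj_p X)) (adj_eps X)) (id2 (adj_l X))).

Record EMFact {C : TwoCat} {b e : Ob C} (X : Adjunction C b e) : Type := {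
  emf_bT : Ob C;
  emf_u : hom emf_bT b;
  emf_mu : cell (comp1 (adj_T X) emf_u) emf_u;
  emf_is : IsEMObj (adj_T X) (adj_mult X) (adj_eta X) emf_u emf_mu;
  emf_k : hom e emf_bT;
  emf_fact : comp1 emf_u emf_k = adj_p X;
  emf_mu_k : heq2 (hcomp emf_mu (id2 emf_k)) (hcomp (id2 (adj_p X)) (adj_eps X))
}.
Arguments emf_bT {C b e X} _.
Arguments emf_u {C b e X} _.
Arguments emf_k {C b e X} _.

Definition KleisliFact {C : TwoCat} {b e : Ob C} (X : Adjunction C b e) : Type :=
  EMFact (adj_op X).
Definition CoEMFact {C : TwoCat} {b e : Ob C} (X : Adjunction C b e) : Type :=
  EMFact (adj_co X).
Definition CoKleisliFact {C : TwoCat} {b e : Ob C} (X : Adjunction C b e) : Type :=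
  EMFact (adj_coop X).

Definition FactIso {C : TwoCat} {x y X X' : Ob C}
    (a : hom X y) (c : hom x X) (a' : hom X' y) (c' : hom x X') : Prop :=
  exists (phi : hom X X') (psi : hom X' X),
    comp1 phi psi = id1 X' /\ comp1 psi phi = id1 X /\
    comp1 a' phi = a /\ comp1 phi c = c'.

Definition Claim1 {C : TwoCat} {b e : Ob C} (X : Adjunction C b e)
    (K : CokernelDiagram (adj_p X)) : Prop :=
  (inhabited (LaxDescFact K) <-> inhabited (EMFact X)) /\
  forall (F : LaxDescFact K) (G : EMFact X),
    FactIso (ldf_d F) (ldf_pH F) (emf_u G) (emf_k G).

Definition Claim2 {C : TwoCat} {b e : Ob C} (X : Adjunction C b e)
    (K : KernelDiagram (adj_l X)) : Prop :=
  (inhabited (LaxCodescFact K) <-> inhabited (KleisliFact X)) /\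
  forall (F : LaxCodescFact K) (G : KleisliFact X),
    @FactIso (op C) _ _ _ _ (ldf_d F) (ldf_pH F) (emf_u G) (emf_k G).

Definition Claim3 {C : TwoCat} {b e : Ob C} (X : Adjunction C b e)
    (K : CokernelDiagram (adj_l X)) : Prop :=
  (inhabited (LaxDescFact K) <-> inhabited (CoEMFact X)) /\
  forall (F : LaxDescFact K) (G : CoEMFact X),
    @FactIso C _ _ _ _ (ldf_d F) (ldf_pH F) (emf_u G) (emf_k G).

Definition Claim4 {C : TwoCat} {b e : Ob C} (X : Adjunction C b e)
    (K : KernelDiagram (adj_p X)) : Prop :=
  (inhabited (LaxCodescFact K) <-> inhabited (CoKleisliFact X)) /\
  forall (F : LaxCodescFact K) (G : CoKleisliFact X),
    @FactIso (op C) _ _ _ _ (ldf_d F) (ldf_pH F) (emf_u G) (emf_k G).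

(* Main.v *)
Require Import Defs.
From Stdlib Require Import Eqdep ClassicalEpsilon ProofIrrelevance.

Section TCsec.
Variable C : TwoCat.

Definition TC (a b : Ob C) := {st : hom a b * hom a b & cell (fst st) (snd st)}.
Definition src {a b : Ob C} (X : TC a b) : hom a b := fst (projT1 X).
Definition tgt {a b : Ob C} (X : TC a b) : hom a b := snd (projT1 X).
Definition T {a b : Ob C} {f g : hom a b} (x : cell f g) : TC a b :=
  existT (fun st : hom a b * hom a b => cell (fst st) (snd st)) (f, g) x.
Definition tid {a b : Ob C} (f : hom a b) : TC a b := T (id2 f).
Definition thc {a b c : Ob C} (X : TC b c) (Y : TC a b) : TC a c :=
  T (hcomp (projT2 X) (projT2 Y)).
Definition tvc {a b : Ob C} (X Y : TC a b) : TC a b :=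
  match excluded_middle_informative (tgt Y = src X) with
  | left e => T (vcomp (projT2 X) (cast2 eq_refl e (projT2 Y)))
  | right _ => X end.

Lemma T_eq {a b : Ob C} {f g : hom a b} (x y : cell f g) : T x = T y -> x = y.
Proof. intro H. exact (inj_pair2 _ _ _ _ _ H). Qed.

Lemma heq2_T {a b : Ob C} {f g f' g' : hom a b} (x : cell f g) (y : cell f' g') :
  heq2 x y <-> T x = T y.
Proof. reflexivity. Qed.

Lemma T_cast {a b : Ob C} {f g f' g' : hom a b} (e1 : f = f') (e2 : g = g') (x : cell f g) :
  T (cast2 e1 e2 x) = T x.
Proof. destruct e1, e2. reflexivity. Qed.

Lemma TC_eta {a b : Ob C} (X : TC a b) : X = T (projT2 X).
Proof. destruct X as [[f g] x]. reflexivity. Qed.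

Lemma TC_view {a b : Ob C} (X : TC a b) : exists (f g : hom a b) (x : cell f g), X = T x.
Proof. destruct X as [[f g] x]. exists f, g, x. reflexivity. Qed.

Ltac dTC X := let f := fresh "f" in let g := fresh "g" in let x := fresh "x" in
  destruct (TC_view X) as (f & g & x & ->).

Lemma thc_T {a b c : Ob C} {g g' : hom b c} {f f' : hom a b} (x : cell g g') (y : cell f f') :
  thc (T x) (T y) = T (hcomp x y).
Proof. reflexivity. Qed.

Lemma tvc_T {a b : Ob C} {f g h : hom a b} (x : cell g h) (y : cell f g) :
  tvc (T x) (T y) = T (vcomp x y).
Proof.
  unfold tvc. destruct (excluded_middle_informative _) as [e|n].
  - simpl in e. simpl. rewrite (UIP_refl _ _ e). reflexivity.
  - exfalso; apply n; reflexivity.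
Qed.

Lemma src_tvc {a b : Ob C} (X Y : TC a b) : tgt Y = src X -> src (tvc X Y) = src Y.
Proof. dTC X; dTC Y; unfold tgt, src; simpl; intro e; subst.
  rewrite tvc_T; reflexivity. Qed.
Lemma tgt_tvc {a b : Ob C} (X Y : TC a b) : tgt Y = src X -> tgt (tvc X Y) = tgt X.
Proof. dTC X; dTC Y; unfold tgt, src; simpl; intro e; subst.
  rewrite tvc_T; reflexivity. Qed.

Lemma tvc_assoc {a b : Ob C} (X Y Z : TC a b) : tgt Y = src X -> tgt Z = src Y ->
  tvc X (tvc Y Z) = tvc (tvc X Y) Z.
Proof. dTC X; dTC Y; dTC Z; unfold tgt, src; simpl;
  intros e1 e2; subst. rewrite !tvc_T. f_equal. apply (ax_vassoc _ (tc_ax C)). Qed.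

Lemma tvc_idl {a b : Ob C} (X : TC a b) : tvc (tid (tgt X)) X = X.
Proof. dTC X. unfold tid; simpl. rewrite tvc_T.
  f_equal. apply (ax_vidl _ (tc_ax C)). Qed.
Lemma tvc_idr {a b : Ob C} (X : TC a b) : tvc X (tid (src X)) = X.
Proof. dTC X. unfold tid; simpl. rewrite tvc_T.
  f_equal. apply (ax_vidr _ (tc_ax C)). Qed.

Lemma thc_assoc {a b c d : Ob C} (X : TC c d) (Y : TC b c) (Z : TC a b) :
  thc X (thc Y Z) = thc (thc X Y) Z.
Proof. destruct X as [[f g] x], Y as [[f' g'] y], Z as [[f'' g''] z].
  exact (ax_hassoc _ (tc_ax C) _ _ _ _ _ _ _ _ _ _ x y z). Qed.

Lemma thc_idl {a b : Ob C} (X : TC a b) : thc (tid (id1 b)) X = X.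
Proof. destruct X as [[f g] x]. exact (ax_hidl _ (tc_ax C) _ _ _ _ x). Qed.
Lemma thc_idr {a b : Ob C} (X : TC a b) : thc X (tid (id1 a)) = X.
Proof. destruct X as [[f g] x]. exact (ax_hidr _ (tc_ax C) _ _ _ _ x). Qed.

Lemma thc_tid {a b c : Ob C} (g : hom b c) (f : hom a b) : thc (tid g) (tid f) = tid (comp1 g f).
Proof. unfold tid, thc; simpl. f_equal. apply (ax_hid _ (tc_ax C)). Qed.

Lemma interchange {a b c : Ob C} (X X' : TC b c) (Y Y' : TC a b) :
  tgt X = src X' -> tgt Y = src Y' ->
  thc (tvc X' X) (tvc Y' Y) = tvc (thc X' Y') (thc X Y).
Proof. dTC X; dTC Y; dTC X'; dTC Y';
  unfold tgt, src; simpl; intros e1 e2; subst.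
  rewrite !tvc_T, !thc_T, tvc_T. f_equal. apply (ax_interchange _ (tc_ax C)). Qed.

Lemma src_T {a b : Ob C} {f g : hom a b} (x : cell f g) : src (T x) = f. Proof. reflexivity. Qed.
Lemma tgt_T {a b : Ob C} {f g : hom a b} (x : cell f g) : tgt (T x) = g. Proof. reflexivity. Qed.
Lemma src_thc {a b c : Ob C} (X : TC b c) (Y : TC a b) : src (thc X Y) = comp1 (src X) (src Y).
Proof. reflexivity. Qed.
Lemma tgt_thc {a b c : Ob C} (X : TC b c) (Y : TC a b) : tgt (thc X Y) = comp1 (tgt X) (tgt Y).
Proof. reflexivity. Qed.

End TCsec.

Arguments TC {C} a b.
Arguments src {C a b} X.
Arguments tgt {C a b} X.
Arguments T {C a b f g} x.
Arguments tid {C a b} f.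
Arguments thc {C a b c} X Y.
Arguments tvc {C a b} X Y.

Infix "<h>" := thc (at level 33, left associativity).
Infix "<v>" := tvc (at level 43, left associativity).

Ltac dTC X := let f := fresh "f" in let g := fresh "g" in let x := fresh "x" in
  destruct (TC_view _ X) as (f & g & x & ->).

Section Gen.
Variable C : TwoCat.
Lemma c1_idl' {a b : Ob C} (f : hom a b) : comp1 (id1 b) f = f.
Proof. exact (ax_idl _ (tc_ax C) _ _ f). Qed.
Lemma src_tid {a b : Ob C} (f : hom a b) : src (tid f) = f. Proof. reflexivity. Qed.
Lemma tgt_tid {a b : Ob C} (f : hom a b) : tgt (tid f) = f. Proof. reflexivity. Qed.

Lemma veq_T {a b : Ob C} {f1 g1 f2 g2 f3 g3 : hom a b}
    (w : cell f1 g1) (x : cell f2 g2) (y : cell f3 g3) :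
  veq w x y -> T w = T x <v> T y.
Proof. intros (m & x' & y' & H1 & H2 & H3). unfold heq2 in *. fold (T w) (T x) (T y) in *.
  fold (T x') (T y') in *. fold (T (vcomp x' y')) in H3.
  rewrite H1, H2, H3, tvc_T. reflexivity. Qed.

Lemma tvc_tid {a b : Ob C} (f : hom a b) : tid f <v> tid f = tid f.
Proof. exact (tvc_idl _ (tid f)). Qed.

Lemma wl_v {a b c : Ob C} (f : hom b c) (Y Z : TC a b) : tgt Z = src Y ->
  tid f <h> (Y <v> Z) = (tid f <h> Y) <v> (tid f <h> Z).
Proof. intro H. rewrite <- interchange by (rewrite ?tgt_tid, ?src_tid; auto).
  rewrite tvc_tid. reflexivity. Qed.
Lemma wr_v {a b c : Ob C} (f : hom a b) (Y Z : TC b c) : tgt Z = src Y ->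
  (Y <v> Z) <h> tid f = (Y <h> tid f) <v> (Z <h> tid f).
Proof. intro H. rewrite <- interchange by (rewrite ?tgt_tid, ?src_tid; auto).
  rewrite tvc_tid. reflexivity. Qed.
Lemma wl_comp {a b c d : Ob C} (f : hom c d) (g : hom b c) (Z : TC a b) :
  tid f <h> (tid g <h> Z) = tid (comp1 f g) <h> Z.
Proof. rewrite thc_assoc, thc_tid. reflexivity. Qed.
Lemma wr_comp {a b c d : Ob C} (Z : TC c d) (g : hom b c) (f : hom a b) :
  (Z <h> tid g) <h> tid f = Z <h> tid (comp1 g f).
Proof. rewrite <- thc_assoc, thc_tid. reflexivity. Qed.
Lemma natl {a b c : Ob C} (Z : TC b c) (W : TC a b) :
  Z <h> W = (Z <h> tid (tgt W)) <v> (tid (src Z) <h> W).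
Proof. rewrite <- interchange by reflexivity. rewrite tvc_idl, tvc_idr. reflexivity. Qed.
Lemma natr {a b c : Ob C} (Z : TC b c) (W : TC a b) :
  Z <h> W = (tid (tgt Z) <h> W) <v> (Z <h> tid (src W)).
Proof. rewrite <- interchange by reflexivity. rewrite tvc_idl, tvc_idr. reflexivity. Qed.
Lemma tvc_idl' {a b : Ob C} (X : TC a b) f : tgt X = f -> tid f <v> X = X.
Proof. intros <-. apply tvc_idl. Qed.
Lemma tvc_idr' {a b : Ob C} (X : TC a b) f : src X = f -> X <v> tid f = X.
Proof. intros <-. apply tvc_idr. Qed.
End Gen.

Lemma TC_eta' (C : TwoCat) {a b : Ob C} (X : TC a b) : X = @T C a b (src X) (tgt X) (projT2 X).
Proof. apply TC_eta. Qed.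

Section OC.
Variable C : TwoCat.

Lemma triple_eq {b y : Ob C} {e : Ob C} (p : hom e b) (h0 h1 h0' h1' : hom b y)
  (beta : cell (comp1 h1 p) (comp1 h0 p)) (beta' : cell (comp1 h1' p) (comp1 h0' p)) :
  h0 = h0' -> h1 = h1' -> T beta = T beta' ->
  existT (fun h0 => {h1 : hom b y & cell (comp1 h1 p) (comp1 h0 p)}) h0 (existT _ h1 beta)
  = existT _ h0' (existT _ h1' beta').
Proof. intros -> -> H. apply T_eq in H. subst. reflexivity. Qed.

Lemma triple_inv {b y : Ob C} {e : Ob C} (p : hom e b) (h0 h1 h0' h1' : hom b y)
  (beta : cell (comp1 h1 p) (comp1 h0 p)) (beta' : cell (comp1 h1' p) (comp1 h0' p)) :
  existT (fun h0 => {h1 : hom b y & cell (comp1 h1 p) (comp1 h0 p)}) h0 (existT _ h1 beta)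
  = existT _ h0' (existT _ h1' beta') ->
  h0 = h0' /\ h1 = h1' /\ T beta = T beta'.
Proof. intro H. split; [|split].
  - exact (f_equal (@projT1 _ _) H).
  - exact (f_equal (fun s => projT1 (projT2 s)) H).
  - exact (f_equal (fun s : {h0 : hom b y & {h1 : hom b y & cell (comp1 h1 p) (comp1 h0 p)}} =>
       T (projT2 (projT2 s))) H).
Qed.

Lemma T_oc_beta {e b o y : Ob C} (p : hom e b) (d0 d1 : hom b o)
    (alpha : cell (comp1 d1 p) (comp1 d0 p)) (h : hom o y) :
  T (oc_beta p d0 d1 alpha h) = tid h <h> T alpha.
Proof. unfold oc_beta. rewrite T_cast. reflexivity. Qed.

Variables (e b o : Ob C) (p : hom e b) (d0 d1 : hom b o) (alpha : cell (comp1 d1 p) (comp1 d0 p)).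
Hypothesis OC : IsOpcomma p d0 d1 alpha.

Lemma oc1 (y : Ob C) (h0 h1 : hom b y) (Z : TC e y) :
  src Z = comp1 h1 p -> tgt Z = comp1 h0 p ->
  exists h : hom o y, comp1 h d0 = h0 /\ comp1 h d1 = h1 /\ tid h <h> T alpha = Z.
Proof. intros e1 e2. destruct (proj1 OC y h0 h1 (cast2 e1 e2 (projT2 Z))) as [h [Hh _]].
  exists h. apply triple_inv in Hh. destruct Hh as (H0 & H1 & H2). split; [|split]; auto.
  rewrite <- T_oc_beta, H2, T_cast. symmetry; apply TC_eta. Qed.

Lemma oc1u (y : Ob C) (h h' : hom o y) :
  comp1 h d0 = comp1 h' d0 -> comp1 h d1 = comp1 h' d1 -> tid h <h> T alpha = tid h' <h> T alpha ->
  h = h'.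
Proof. intros e0 e1 e2.
  destruct (proj1 OC y (comp1 h' d0) (comp1 h' d1) (oc_beta p d0 d1 alpha h')) as [h2 [_ U]].
  transitivity h2; [symmetry|]; apply U.
  - apply triple_eq; auto. rewrite !T_oc_beta. exact e2.
  - reflexivity.
Qed.

Lemma oc2 (y : Ob C) (h h' : hom o y) (Z0 Z1 : TC b y) :
  src Z0 = comp1 h d0 -> tgt Z0 = comp1 h' d0 -> src Z1 = comp1 h d1 -> tgt Z1 = comp1 h' d1 ->
  (Z0 <h> tid p) <v> (tid h <h> T alpha) = (tid h' <h> T alpha) <v> (Z1 <h> tid p) ->
  exists Z : TC o y, src Z = h /\ tgt Z = h' /\ Z <h> tid d0 = Z0 /\ Z <h> tid d1 = Z1.
Proof. intros s0 t0 s1 t1 H.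
  destruct (proj2 OC y h h' (cast2 s0 t0 (projT2 Z0)) (cast2 s1 t1 (projT2 Z1))) as [xi [[X0 X1] _]].
  - apply T_eq. rewrite <- !tvc_T. rewrite <- !thc_T. rewrite !T_oc_beta, !T_cast, <- (TC_eta' _ Z0), <- (TC_eta' _ Z1).
    exact H.
  - exists (T xi). split; [reflexivity|split; [reflexivity|split]].
    + change (T (hcomp xi (id2 d0)) = Z0). rewrite X0, T_cast, <- (TC_eta' _ Z0). reflexivity.
    + change (T (hcomp xi (id2 d1)) = Z1). rewrite X1, T_cast, <- (TC_eta' _ Z1). reflexivity.
Qed.
End OC.

Lemma po1 (C : TwoCat) {c c0 c1 P : Ob C} (f0 : hom c c0) (f1 : hom c c1)
    (q0 : hom c0 P) (q1 : hom c1 P) : IsPushout2 f0 f1 q0 q1 ->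
  forall (y : Ob C) (k0 : hom c0 y) (k1 : hom c1 y),
      comp1 k0 f0 = comp1 k1 f1 -> exists k : hom P y, comp1 k q0 = k0 /\ comp1 k q1 = k1.
Proof. intros [_ [H _]] y k0 k1 E. destruct (H y k0 k1 E) as [k [Hk _]]. eauto. Qed.

Definition untc {C : TwoCat} {a b : Ob C} (Z : TC a b) {f g : hom a b} (e1 : src Z = f) (e2 : tgt Z = g)
  : cell f g := cast2 e1 e2 (projT2 Z).
Lemma T_untc {C : TwoCat} {a b : Ob C} (Z : TC a b) {f g : hom a b} (e1 : src Z = f) (e2 : tgt Z = g) :
  T (untc Z e1 e2) = Z.
Proof. unfold untc. rewrite T_cast. symmetry. apply TC_eta'. Qed.

Lemma sig_iff {C : TwoCat} {y b a c : Ob C} (F G : hom y b -> hom a c) (h1 h2 : hom y b)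
  (x : cell (F h1) (G h1)) (x' : cell (F h2) (G h2)) :
  existT (fun h' => cell (F h') (G h')) h1 x = existT _ h2 x' <-> h1 = h2 /\ T x = T x'.
Proof. split.
  - intro H. split. exact (f_equal (@projT1 _ _) H).
    exact (f_equal (fun s : {h' : hom y b & cell (F h') (G h')} => T (projT2 s)) H).
  - intros [-> H]. apply T_eq in H. subst. reflexivity. Qed.

Section Rep.
Variables (C : TwoCat) (b Z : Ob C).
Variable ObjT : forall y : Ob C, hom y b -> TC y Z -> Prop.
Variable MorT : forall y : Ob C, hom y b -> hom y b -> TC y Z -> TC y Z -> TC y b -> Prop.

Definition RepT {L : Ob C} (d : hom L b) (PsiT : TC L Z) : Prop :=
 (forall y (g : hom y L), ObjT y (comp1 d g) (PsiT <h> tid g)) /\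
 (forall y (h : hom y b) B, ObjT y h B -> exists g, comp1 d g = h /\ PsiT <h> tid g = B) /\
 (forall y (g g' : hom y L), comp1 d g = comp1 d g' -> PsiT <h> tid g = PsiT <h> tid g' -> g = g') /\
 (forall y (g g' : hom y L) Xi, src Xi = comp1 d g -> tgt Xi = comp1 d g' ->
    MorT y (comp1 d g') (comp1 d g) (PsiT <h> tid g') (PsiT <h> tid g) Xi ->
    exists W, src W = g /\ tgt W = g' /\ tid d <h> W = Xi) /\
 (forall y (g g' : hom y L) W W', src W = g -> tgt W = g' -> src W' = g -> tgt W' = g' ->
    tid d <h> W = tid d <h> W' -> W = W').
End Rep.

Section EMc.
Variables (C : TwoCat) (b : Ob C) (t : hom b b) (m : cell (comp1 t t) t) (eta : cell (id1 b) t).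

Definition AlgT {y : Ob C} (h : hom y b) (C0 : TC y b) : Prop :=
  src C0 = comp1 t h /\ tgt C0 = h /\ C0 <v> (tid t <h> C0) = C0 <v> (T m <h> tid h) /\
  C0 <v> (T eta <h> tid h) = tid h.
Definition AlgMorT {y : Ob C} (h0 h1 : hom y b) (C0 C1 Xi : TC y b) : Prop :=
  Xi <v> C1 = C0 <v> (tid t <h> Xi).

Lemma AlgObj_T {y : Ob C} (h : hom y b) (beta : cell (comp1 t h) h) :
  AlgObj t m eta h beta <-> AlgT h (T beta).
Proof. unfold AlgObj, AlgT, heq2. fold (T (vcomp beta (hcomp (id2 t) beta))).
  fold (T (vcomp beta (hcomp m (id2 h)))) (T (vcomp beta (hcomp eta (id2 h)))) (T (id2 h)).
  rewrite <- !tvc_T. split; [intros [H1 H2]; auto | intros (_ & _ & H1 & H2); auto]. Qed.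

Lemma T_em {X y : Ob C} (u : hom X b) (mu : cell (comp1 t u) u) (g : hom y X) :
  T (em_beta t u mu g) = T mu <h> tid g.
Proof. unfold em_beta. rewrite T_cast. reflexivity. Qed.

Lemma em_nat {X y : Ob C} (u : hom X b) (mu : cell (comp1 t u) u) (g g' : hom y X) (W : TC y X) :
  src W = g -> tgt W = g' ->
  (tid u <h> W) <v> (T mu <h> tid g) = (T mu <h> tid g') <v> (tid t <h> (tid u <h> W)).
Proof. intros <- <-. transitivity (T mu <h> W).
  - symmetry. apply natr.
  - rewrite (natl _ (T mu) W), wl_comp. reflexivity. Qed.

Lemma EM_Rep {X : Ob C} (u : hom X b) (mu : cell (comp1 t u) u) :
  IsEMObj t m eta u mu <-> RepT C b b (@AlgT) (@AlgMorT) u (T mu).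
Proof. split.
  - intros (E1 & E2 & E3). split; [|split; [|split; [|split]]].
    + intros y g. rewrite <- T_em. apply AlgObj_T. apply E1.
    + intros y h B (sB & tB & HB). destruct (E2 y h (untc B sB tB)) as [g [Hg _]].
      { apply AlgObj_T. rewrite T_untc. exact (conj sB (conj tB HB)). }
      exists g. apply sig_iff in Hg. destruct Hg as [H1 H2]. rewrite T_untc, T_em in H2. split; auto.
    + intros y g g' e1 e2. destruct (E2 y (comp1 u g') (em_beta t u mu g') (E1 y g')) as [g0 [_ U]].
      transitivity g0; [symmetry|]; apply U; apply sig_iff; split; auto. rewrite !T_em. auto.
    + intros y g g' Xi sX tX HX. destruct (E3 y g g' (untc Xi sX tX)) as [xi [Hxi _]].
      { apply T_eq. unfold AlgMorT in HX. rewrite <- !tvc_T, <- thc_T, !T_em, T_untc. exact HX. }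
      exists (T xi). split; [reflexivity|split; [reflexivity|]].
      change (T (hcomp (id2 u) xi) = Xi). rewrite Hxi. apply T_untc.
    + intros y g g' W W' sW tW sW' tW' HW. subst g g'.
      pose (xi := untc W eq_refl eq_refl). pose (xi' := untc W' sW' tW').
      destruct (E3 y (src W) (tgt W) (hcomp (id2 u) xi)) as [x0 [_ U]].
      { apply T_eq. rewrite <- !tvc_T, <- !thc_T, !T_em. unfold xi. rewrite T_untc.
        apply em_nat; reflexivity. }
      assert (E : xi = xi').
      { transitivity x0; [symmetry|]; apply U. reflexivity. apply T_eq.
        change (tid u <h> T xi' = tid u <h> T xi). unfold xi, xi'. rewrite !T_untc. symmetry. exact HW. }
      transitivity (T xi). unfold xi; rewrite T_untc; reflexivity.
      rewrite E. unfold xi'. apply T_untc.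
  - intros (E1 & E2 & E3 & E4 & E5). split; [|split].
    + intros y g. apply AlgObj_T. rewrite T_em. apply E1.
    + intros y h beta Hb. apply AlgObj_T in Hb. destruct (E2 y h (T beta) Hb) as [g [H1 H2]].
      exists g. split.
      * apply sig_iff. split; auto. rewrite T_em. exact H2.
      * intros g' Hg'. apply sig_iff in Hg'. destruct Hg' as [H3 H4]. rewrite T_em in H4.
        apply E3; congruence.
    + intros y g g' m' Hm. destruct (E4 y g g' (T m') eq_refl eq_refl) as (W & sW & tW & HW).
      { unfold AlgMorT. rewrite <- !T_em. change (T m' <v> T (em_beta t u mu g) = T (em_beta t u mu g') <v> T (hcomp (id2 t) m')). rewrite !tvc_T. f_equal. exact Hm. }
      exists (untc W sW tW). split.
      * apply T_eq. change (tid u <h> T (untc W sW tW) = T m'). rewrite T_untc. exact HW.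
      * intros x' Hx'. apply T_eq. rewrite T_untc. apply (E5 y g g'); auto.
        change (tid u <h> W = tid u <h> T x'). rewrite HW. change (T m' = T (hcomp (id2 u) x')).
        rewrite Hx'. reflexivity.
Qed.
End EMc.

Lemma T_veq {C : TwoCat} {a b : Ob C} {f1 g1 f2 g2 f3 g3 : hom a b}
    (w : cell f1 g1) (x : cell f2 g2) (y : cell f3 g3) :
  g3 = f2 -> T w = T x <v> T y -> veq w x y.
Proof. intros e H. subst g3. exists f2, x, y. split; [reflexivity|split; [reflexivity|]].
  unfold heq2. fold (T w) (T (vcomp x y)). rewrite H, tvc_T. reflexivity. Qed.

Section Dc.
Variables (C : TwoCat) (e b : Ob C) (p : hom e b) (K : CokernelDiagram p).
Local Notation d0 := (ck_d0 K).
Local Notation d1 := (ck_d1 K).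
Local Notation D0 := (ck_D0 K).
Local Notation D1 := (ck_D1 K).
Local Notation D2 := (ck_D2 K).
Local Notation s := (ck_s0 K).
Local Notation O := (ck_O K).

Definition DescT {y : Ob C} (h : hom y b) (B : TC y O) : Prop :=
  src B = comp1 d1 h /\ tgt B = comp1 d0 h /\
  tid D1 <h> B = (tid D0 <h> B) <v> (tid D2 <h> B) /\ tid s <h> B = tid h.
Definition DescMorT {y : Ob C} (h0 h1 : hom y b) (B0 B1 : TC y O) (Xi : TC y b) : Prop :=
  B0 <v> (tid d1 <h> Xi) = (tid d0 <h> Xi) <v> B1.

Lemma DescObj_T {y : Ob C} (h : hom y b) (beta : cell (comp1 d1 h) (comp1 d0 h)) :
  DescObj K h beta <-> DescT h (T beta).
Proof. unfold DescObj, DescT. split.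
  - intros [H1 H2]. split; [reflexivity|split; [reflexivity|split]].
    + exact (veq_T _ _ _ _ H1).
    + exact H2.
  - intros (_ & _ & H1 & H2). split.
    + apply T_veq; [|exact H1]. rewrite !c1_assoc. f_equal. exact (proj1 (ck_pushout _ K)).
    + exact H2. Qed.

Lemma T_ld {L y : Ob C} (d : hom L b) (Psi : cell (comp1 d1 d) (comp1 d0 d)) (g : hom y L) :
  T (ld_beta K d Psi g) = T Psi <h> tid g.
Proof. unfold ld_beta. rewrite T_cast. reflexivity. Qed.

Lemma ld_nat {L y : Ob C} (d : hom L b) (Psi : cell (comp1 d1 d) (comp1 d0 d)) (g g' : hom y L) (W : TC y L) :
  src W = g -> tgt W = g' ->
  (T Psi <h> tid g') <v> (tid d1 <h> (tid d <h> W)) = (tid d0 <h> (tid d <h> W)) <v> (T Psi <h> tid g).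
Proof. intros <- <-. transitivity (T Psi <h> W).
  - rewrite (natl _ (T Psi) W), wl_comp. reflexivity.
  - rewrite (natr _ (T Psi) W), wl_comp. reflexivity. Qed.

Lemma Desc_Rep {L : Ob C} (d : hom L b) (Psi : cell (comp1 d1 d) (comp1 d0 d)) :
  IsLaxDescObj K d Psi <-> RepT C b O (@DescT) (@DescMorT) d (T Psi).
Proof. split.
  - intros (E1 & E2 & E3). split; [|split; [|split; [|split]]].
    + intros y g. rewrite <- T_ld. apply DescObj_T. apply E1.
    + intros y h B (sB & tB & HB). destruct (E2 y h (untc B sB tB)) as [g [Hg _]].
      { apply DescObj_T. rewrite T_untc. exact (conj sB (conj tB HB)). }
      exists g. apply (sig_iff (fun h' => comp1 d1 h') (fun h' => comp1 d0 h')) in Hg.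
      destruct Hg as [H1 H2]. rewrite T_untc, T_ld in H2. split; auto.
    + intros y g g' e1 e2. destruct (E2 y (comp1 d g') (ld_beta K d Psi g') (E1 y g')) as [g0 [_ U]].
      transitivity g0; [symmetry|]; apply U;
        apply (sig_iff (fun h' => comp1 d1 h') (fun h' => comp1 d0 h')); split; auto.
      rewrite !T_ld. auto.
    + intros y g g' Xi sX tX HX. destruct (E3 y g g' (untc Xi sX tX)) as [xi [Hxi _]].
      { apply T_eq. unfold DescMorT in HX. rewrite <- !T_ld in HX. rewrite <- (T_untc Xi sX tX) in HX.
        change (T (ld_beta K d Psi g') <v> T (hcomp (id2 d1) (untc Xi sX tX)) =
                T (hcomp (id2 d0) (untc Xi sX tX)) <v> T (ld_beta K d Psi g)) in HX.
        rewrite <- !tvc_T. exact HX. }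
      exists (T xi). split; [reflexivity|split; [reflexivity|]].
      change (T (hcomp (id2 d) xi) = Xi). rewrite Hxi. apply T_untc.
    + intros y g g' W W' sW tW sW' tW' HW. subst g g'.
      pose (xi := untc W eq_refl eq_refl). pose (xi' := untc W' sW' tW').
      destruct (E3 y (src W) (tgt W) (hcomp (id2 d) xi)) as [x0 [_ U]].
      { apply T_eq. rewrite <- !tvc_T. rewrite !T_ld.
        change (T Psi <h> tid (tgt W) <v> tid d1 <h> (tid d <h> T xi) =
          tid d0 <h> (tid d <h> T xi) <v> T Psi <h> tid (src W)).
        unfold xi. rewrite T_untc. apply ld_nat; reflexivity. }
      assert (E : xi = xi').
      { transitivity x0; [symmetry|]; apply U. reflexivity. apply T_eq.
        change (tid d <h> T xi' = tid d <h> T xi). unfold xi, xi'. rewrite !T_untc. symmetry. exact HW. }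
      transitivity (T xi). unfold xi; rewrite T_untc; reflexivity.
      rewrite E. unfold xi'. apply T_untc.
  - intros (E1 & E2 & E3 & E4 & E5). split; [|split].
    + intros y g. apply DescObj_T. rewrite T_ld. apply E1.
    + intros y h beta Hb. apply DescObj_T in Hb. destruct (E2 y h (T beta) Hb) as [g [H1 H2]].
      exists g. split.
      * apply (sig_iff (fun h' => comp1 d1 h') (fun h' => comp1 d0 h')). split; auto.
        rewrite T_ld. exact H2.
      * intros g' Hg'. apply (sig_iff (fun h' => comp1 d1 h') (fun h' => comp1 d0 h')) in Hg'.
        destruct Hg' as [H3 H4]. rewrite T_ld in H4.
        apply E3; congruence.
    + intros y g g' m' Hm. destruct (E4 y g g' (T m') eq_refl eq_refl) as (W & sW & tW & HW).
      { unfold DescMorT. rewrite <- !T_ld.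
        change (T (ld_beta K d Psi g') <v> T (hcomp (id2 d1) m') =
                T (hcomp (id2 d0) m') <v> T (ld_beta K d Psi g)).
        rewrite !tvc_T. f_equal. exact Hm. }
      exists (untc W sW tW). split.
      * apply T_eq. change (tid d <h> T (untc W sW tW) = T m'). rewrite T_untc. exact HW.
      * intros x' Hx'. apply T_eq. rewrite T_untc. apply (E5 y g g'); auto.
        change (tid d <h> W = tid d <h> T x'). rewrite HW. change (T m' = T (hcomp (id2 d) x')).
        rewrite Hx'. reflexivity.
Qed.
End Dc.

Lemma RepIso (C : TwoCat) (b Z : Ob C) ObjT MorT {x L X : Ob C} (d : hom L b) (u : hom X b)
  (m1 : TC L Z) (m2 : TC X Z) (c1 : hom x L) (c2 : hom x X) :
  RepT C b Z ObjT MorT d m1 -> RepT C b Z ObjT MorT u m2 ->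
  comp1 d c1 = comp1 u c2 -> m1 <h> tid c1 = m2 <h> tid c2 -> FactIso d c1 u c2.
Proof. intros (P1 & P2 & P3 & _) (Q1 & Q2 & Q3 & _) e1 e2.
  assert (O1 : ObjT L d m1). { pose proof (P1 L (id1 L)) as H. rewrite c1_idr, thc_idr in H. exact H. }
  assert (O2 : ObjT X u m2). { pose proof (Q1 X (id1 X)) as H. rewrite c1_idr, thc_idr in H. exact H. }
  destruct (Q2 L d m1 O1) as (phi & ph1 & ph2).
  destruct (P2 X u m2 O2) as (psi & ps1 & ps2).
  exists phi, psi. split; [|split; [|split]].
  - apply Q3. rewrite c1_assoc, ph1, ps1, c1_idr. reflexivity.
    rewrite <- wr_comp, ph2, ps2, thc_idr. reflexivity.
  - apply P3. rewrite c1_assoc, ps1, ph1, c1_idr. reflexivity.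
    rewrite <- wr_comp, ps2, ph2, thc_idr. reflexivity.
  - exact ph1.
  - apply Q3. rewrite c1_assoc, ph1. exact e1.
    rewrite <- wr_comp, ph2. exact e2.
Qed.

Section Main.
Variables (C : TwoCat) (b e : Ob C) (X : Adjunction C b e) (K : CokernelDiagram (adj_p X)).
Local Notation p := (adj_p X).
Local Notation l := (adj_l X).
Local Notation t := (comp1 (adj_p X) (adj_l X)).
Local Notation E := (T (adj_eps X)).
Local Notation N := (T (adj_eta X)).
Local Notation A := (T (ck_alpha K)).
Local Notation d0 := (ck_d0 K).
Local Notation d1 := (ck_d1 K).
Local Notation D0 := (ck_D0 K).
Local Notation D1 := (ck_D1 K).
Local Notation D2 := (ck_D2 K).
Local Notation s := (ck_s0 K).
Local Notation O := (ck_O K).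

Lemma TL : tid l = (E <h> tid l) <v> (tid l <h> N).
Proof. exact (veq_T _ _ _ _ (adj_tri_l X)). Qed.
Lemma TP : tid p = (tid p <h> E) <v> (N <h> tid p).
Proof. exact (veq_T _ _ _ _ (adj_tri_p X)). Qed.
Lemma KP : comp1 D2 d0 = comp1 D0 d1.
Proof. exact (proj1 (ck_pushout _ K)). Qed.
Lemma D1A : tid D1 <h> A = (tid D0 <h> A) <v> (tid D2 <h> A).
Proof. exact (veq_T _ _ _ _ (ck_D1_alpha _ K)). Qed.
Lemma sA : tid s <h> A = tid p.
Proof. exact (ck_s0_alpha _ K). Qed.

Definition A' := (A <h> tid l) <v> (tid d1 <h> N).
Definition Th {y : Ob C} (h : hom y b) (C0 : TC y b) := (tid d0 <h> C0) <v> (A' <h> tid h).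

Ltac c1n := repeat rewrite <- c1_assoc; rewrite ?c1_idl', ?c1_idr.

Ltac bd0 := repeat first [rewrite src_thc | rewrite tgt_thc | rewrite src_tid | rewrite tgt_tid
  | rewrite src_T | rewrite tgt_T].
Lemma c1_fact {a0 a1 a2 : Ob C} {x : hom a1 a2} {y : hom a0 a1} {z : hom a0 a2} (H : comp1 x y = z)
  {a : Ob C} (w : hom a a0) : comp1 x (comp1 y w) = comp1 z w.
Proof. rewrite c1_assoc, H. reflexivity. Qed.
Lemma KP' {y : Ob C} (w : hom y b) : comp1 D2 (comp1 d0 w) = comp1 D0 (comp1 d1 w).
Proof. rewrite !c1_assoc, KP. reflexivity. Qed.
Lemma src_A' : src A' = comp1 d1 (id1 b).
Proof. unfold A'. rewrite src_tvc. reflexivity. bd0. c1n. reflexivity. Qed.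
Lemma tgt_A' : tgt A' = comp1 (comp1 d0 p) l.
Proof. unfold A'. rewrite tgt_tvc. reflexivity. bd0. c1n. reflexivity. Qed.

Definition M := (tid p <h> E) <h> tid l.
Lemma src_M : src M = comp1 (comp1 p (comp1 l p)) l. Proof. reflexivity. Qed.
Lemma tgt_M : tgt M = comp1 (comp1 p (id1 e)) l. Proof. reflexivity. Qed.

Ltac facts := repeat match goal with
  | H : comp1 ?x ?y = ?z |- context [comp1 ?x (comp1 ?y ?w)] => rewrite (c1_fact H w)
  | H : comp1 ?x ?y = ?z |- context [comp1 ?x ?y] => rewrite H
  end.
Ltac hyps := match goal with H : src ?Z = _ |- context [src ?Z] => rewrite H
   | H : tgt ?Z = _ |- context [tgt ?Z] => rewrite H end.
Ltac bd := repeat first [rewrite src_thc | rewrite tgt_thc | rewrite src_tid | rewrite tgt_tid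
  | rewrite src_T | rewrite tgt_T | rewrite src_A' | rewrite tgt_A' | rewrite src_M | rewrite tgt_M
  | rewrite src_tvc by bd | rewrite tgt_tvc by bd | hyps];
  repeat progress (c1n; rewrite ?KP, ?KP'; facts); try reflexivity.



Lemma sA' : tid s <h> A' = N.
Proof. unfold A'. rewrite wl_v by bd. rewrite thc_assoc, sA, wl_comp, (ck_s0_d1 _ K), thc_idl, thc_tid.
  apply (tvc_idl _ N). Qed.

Lemma ThUnit {y : Ob C} (h : hom y b) (C0 : TC y b) :
  src C0 = comp1 t h -> tgt C0 = h -> C0 <v> (N <h> tid h) = tid h -> tid s <h> Th h C0 = tid h.
Proof. intros Hs Ht U. unfold Th. rewrite wl_v.
  2:{ bd; rewrite ?tgt_A', ?Hs; bd. }
  rewrite wl_comp, (ck_s0_d0 _ K), thc_idl, thc_assoc, sA'. exact U. Qed.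

Lemma D1A' : tid D1 <h> A' = ((tid D0 <h> A) <h> tid l) <v> (tid D2 <h> A').
Proof. unfold A'. rewrite wl_v by bd. rewrite thc_assoc, D1A, wr_v by bd.
  rewrite wl_comp, (ck_D1_d1 _ K), <- wl_comp. rewrite (wl_v _ D2) by bd.
  rewrite <- (thc_assoc _ (tid D2) A (tid l)), tvc_assoc by bd. reflexivity. Qed.

Ltac nrm := repeat (rewrite ?thc_assoc, ?thc_tid, ?wr_comp, ?thc_idl, ?thc_idr); c1n.


Lemma S1 : (tid d0 <h> M) <v> (A' <h> tid t) = A <h> tid l.
Proof. unfold M, A'. rewrite wr_v by bd. nrm.
  assert (H1 : A <h> tid (comp1 l t) = (A <h> tid (comp1 l p)) <h> tid l)
    by (rewrite wr_comp; c1n; reflexivity).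
  rewrite H1, tvc_assoc by bd. rewrite <- wr_v by bd.
  assert (H3 : tid (comp1 d0 p) <h> E <v> A <h> tid (comp1 l p) = A <v> (tid (comp1 d1 p) <h> E)).
  { transitivity (A <h> E). symmetry; apply natr. rewrite (natl _ A E).
    apply (f_equal (fun Z => Z <v> _)). apply thc_idr. }
  rewrite H3, wr_v by bd.
  assert (H2 : tid (comp1 d1 p) <h> E <h> tid l <v> tid d1 <h> N <h> tid t = tid (comp1 d1 t)).
  { transitivity (tid d1 <h> ((((tid p <h> E) <v> (N <h> tid p))) <h> tid l)).
    - rewrite wr_v, wl_v by bd. nrm. reflexivity.
    - rewrite <- TP, !thc_tid. reflexivity. }
  rewrite <- tvc_assoc, H2 by bd. rewrite (c1_assoc d1 p l). exact (tvc_idr _ (A <h> tid l)). Qed.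

Lemma Qlem {y : Ob C} (h : hom y b) (C0 : TC y b) : src C0 = comp1 t h -> tgt C0 = h ->
  C0 <v> (tid t <h> C0) = C0 <v> (M <h> tid h) ->
  (tid d0 <h> C0) <v> (A' <h> tid h) <v> (tid d1 <h> C0) = (tid d0 <h> C0) <v> ((A <h> tid l) <h> tid h).
Proof. intros Hs Ht As.
  assert (H1 : A' <h> tid h <v> tid d1 <h> C0 = (tid d0 <h> (tid t <h> C0)) <v> (A' <h> tid (comp1 t h))).
  { transitivity (A' <h> C0).
    - rewrite (natl _ A' C0), Ht, src_A', c1_idr. reflexivity.
    - rewrite (natr _ A' C0), tgt_A', Hs, wl_comp. c1n. reflexivity. }
  rewrite <- tvc_assoc, H1 by bd. rewrite tvc_assoc by bd. rewrite <- wl_v by bd.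
  rewrite As, wl_v by bd. rewrite <- tvc_assoc by bd.
  assert (H2 : tid d0 <h> (M <h> tid h) <v> A' <h> tid (comp1 t h) = (A <h> tid l) <h> tid h).
  { rewrite <- S1, wr_v by bd. rewrite thc_assoc, wr_comp. reflexivity. }
  rewrite H2. reflexivity. Qed.

Lemma ThCoc {y : Ob C} (h : hom y b) (C0 : TC y b) : src C0 = comp1 t h -> tgt C0 = h ->
  C0 <v> (tid t <h> C0) = C0 <v> (M <h> tid h) ->
  tid D1 <h> Th h C0 = (tid D0 <h> Th h C0) <v> (tid D2 <h> Th h C0).
Proof. intros Hs Ht As. unfold Th. rewrite !wl_v by bd.
  rewrite !wl_comp, (ck_D1_d0 _ K), KP, thc_assoc, D1A', wr_v by bd.
  rewrite <- (wl_comp _ D0 d0), <- (wl_comp _ D0 d1).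
  transitivity (tid D0 <h> ((tid d0 <h> C0) <v> (A' <h> tid h) <v> (tid d1 <h> C0)) <v> tid D2 <h> (A' <h> tid h)).
  2:{ rewrite (wl_v _ D0), (wl_v _ D0) by bd. rewrite !tvc_assoc by bd. reflexivity. }
  rewrite Qlem by assumption. rewrite wl_v by bd. rewrite !thc_assoc. rewrite !tvc_assoc by bd. reflexivity. Qed.

Lemma Lmor2 {y : Ob C} (h0 h1 : hom y b) (C0 C1 Xi : TC y b) :
  src C0 = comp1 t h0 -> tgt C0 = h0 -> src C1 = comp1 t h1 -> tgt C1 = h1 ->
  src Xi = h1 -> tgt Xi = h0 ->
  Xi <v> C1 = C0 <v> (tid t <h> Xi) ->
  Th h0 C0 <v> (tid d1 <h> Xi) = (tid d0 <h> Xi) <v> Th h1 C1.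
Proof. intros s0 t0 s1 t1 sx tx H. unfold Th.
  rewrite <- tvc_assoc by bd.
  assert (H1 : A' <h> tid h0 <v> tid d1 <h> Xi = (tid d0 <h> (tid t <h> Xi)) <v> (A' <h> tid h1)).
  { transitivity (A' <h> Xi).
    - rewrite (natl _ A' Xi), tx, src_A', c1_idr. reflexivity.
    - rewrite (natr _ A' Xi), tgt_A', sx, wl_comp. c1n. reflexivity. }
  rewrite H1, tvc_assoc by bd. rewrite <- wl_v by bd. rewrite <- H, wl_v by bd.
  rewrite tvc_assoc by bd. reflexivity. Qed.

Lemma NatTh {y y' : Ob C} (h : hom y b) (g : hom y' y) (C0 : TC y b) :
  src C0 = comp1 t h -> tgt C0 = h ->
  Th (comp1 h g) (C0 <h> tid g) = (Th h C0) <h> tid g.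
Proof. intros Hs Ht. unfold Th. rewrite wr_v by bd. rewrite thc_assoc, wr_comp. reflexivity. Qed.

Lemma oc1K {y : Ob C} (h0 h1 : hom b y) (Z : TC e y) :
  src Z = comp1 h1 p -> tgt Z = comp1 h0 p ->
  exists h : hom O y, comp1 h d0 = h0 /\ comp1 h d1 = h1 /\ tid h <h> A = Z.
Proof. apply oc1. exact (ck_opcomma _ K). Qed.
Lemma oc1uK {y : Ob C} (h h' : hom O y) :
  comp1 h d0 = comp1 h' d0 -> comp1 h d1 = comp1 h' d1 -> tid h <h> A = tid h' <h> A -> h = h'.
Proof. apply oc1u. exact (ck_opcomma _ K). Qed.
Lemma oc2K {y : Ob C} (h h' : hom O y) (Z0 Z1 : TC b y) :
  src Z0 = comp1 h d0 -> tgt Z0 = comp1 h' d0 -> src Z1 = comp1 h d1 -> tgt Z1 = comp1 h' d1 ->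
  (Z0 <h> tid p) <v> (tid h <h> A) = (tid h' <h> A) <v> (Z1 <h> tid p) ->
  exists Z : TC O y, src Z = h /\ tgt Z = h' /\ Z <h> tid d0 = Z0 /\ Z <h> tid d1 = Z1.
Proof. apply oc2. exact (ck_opcomma _ K). Qed.
Lemma po1K {y : Ob C} (k0 k1 : hom O y) : comp1 k0 d0 = comp1 k1 d1 ->
  exists k : hom (ck_P K) y, comp1 k D2 = k0 /\ comp1 k D0 = k1.
Proof. apply po1. exact (ck_pushout _ K). Qed.

Lemma EE1 : E <h> E = E <v> (tid (comp1 l p) <h> E).
Proof. transitivity ((E <h> tid (tgt E)) <v> (tid (src E) <h> E)). apply natl.
  apply (f_equal (fun Z => Z <v> _)). apply thc_idr. Qed.
Lemma EE2 : E <h> E = E <v> (E <h> tid (comp1 l p)).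
Proof. transitivity ((tid (tgt E) <h> E) <v> (E <h> tid (src E))). apply natr.
  apply (f_equal (fun Z => Z <v> _)). apply thc_idl. Qed.

Section R.
Variable r : hom O b.
Hypotheses (rd0 : comp1 r d0 = id1 b) (rd1 : comp1 r d1 = t) (rA : tid r <h> A = tid p <h> E).

Lemma rA' : tid r <h> A' = tid t.
Proof. unfold A'. rewrite wl_v. 2:{ bd. }
  rewrite thc_assoc, rA, wl_comp, rd1, <- thc_assoc, <- wl_comp, <- wl_v.
  2:{ bd. }
  rewrite <- TL, thc_tid. reflexivity. Qed.

Lemma PhiTheta {y : Ob C} (h : hom y b) (C0 : TC y b) :
  src C0 = comp1 t h -> tgt C0 = h -> tid r <h> Th h C0 = C0.
Proof. intros Hs Ht. unfold Th. rewrite wl_v.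
  2:{ bd; rewrite ?tgt_A', ?Hs; bd. }
  rewrite wl_comp, rd0, thc_idl, thc_assoc, rA', thc_tid, <- Hs, tvc_idr. reflexivity. Qed.

Lemma Lmor1 {y : Ob C} (h0 h1 : hom y b) (B0 B1 : TC y O) (Xi : TC y b) :
  src B0 = comp1 d1 h0 -> tgt B0 = comp1 d0 h0 -> src B1 = comp1 d1 h1 -> tgt B1 = comp1 d0 h1 ->
  src Xi = h1 -> tgt Xi = h0 ->
  B0 <v> (tid d1 <h> Xi) = (tid d0 <h> Xi) <v> B1 ->
  (tid r <h> B0) <v> (tid t <h> Xi) = Xi <v> (tid r <h> B1).
Proof. intros s0 t0 s1 t1 sx tx H. apply (f_equal (fun Z => tid r <h> Z)) in H.
  rewrite !wl_v in H by bd. rewrite !wl_comp, rd0, rd1, thc_idl in H. exact H. Qed.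

Lemma PhiUnit {y : Ob C} (h : hom y b) (B : TC y O) : src B = comp1 d1 h -> tgt B = comp1 d0 h ->
  tid s <h> B = tid h -> (tid r <h> B) <v> (N <h> tid h) = tid h.
Proof. intros sB tB uB. pose proof (ck_s0_d0 _ K) as sd0. pose proof (ck_s0_d1 _ K) as sd1.
  destruct (oc2K s r (tid (id1 b)) N) as (Z & sZ & tZ & Z0 & Z1); try (bd; fail).
  { rewrite thc_idl, sA, rA, <- TP. apply tvc_tid. }
  transitivity (Z <h> B).
  - rewrite (natr _ Z B), tZ, sB, <- (wr_comp _ Z d1 h), Z1. reflexivity.
  - rewrite (natl _ Z B), tB, sZ, uB, <- (wr_comp _ Z d0 h), Z0, thc_idl. apply tvc_tid. Qed.

Lemma PhiAssoc {y : Ob C} (h : hom y b) (B : TC y O) : src B = comp1 d1 h -> tgt B = comp1 d0 h ->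
  tid D1 <h> B = (tid D0 <h> B) <v> (tid D2 <h> B) ->
  (tid r <h> B) <v> (tid t <h> (tid r <h> B)) = (tid r <h> B) <v> (M <h> tid h).
Proof. intros sB tB cB.
  destruct (po1K (comp1 t r) r) as (v & vD2 & vD0). { bd. }
  pose proof (ck_D1_d0 _ K) as D1d0. pose proof (ck_D1_d1 _ K) as D1d1.
  assert (VA : tid (comp1 v D1) <h> A = (tid p <h> E) <v> (tid t <h> (tid p <h> E))).
  { rewrite <- wl_comp, D1A, wl_v by bd. rewrite !wl_comp, vD0, vD2, <- (wl_comp _ t r A), rA.
    rewrite ?wl_comp. reflexivity. }
  destruct (oc2K (comp1 v D1) r (tid (id1 b)) M) as (Z & sZ & tZ & Z0 & Z1); try (bd; fail).
  { rewrite thc_idl, VA, rA. rewrite tvc_idl' by bd.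
    transitivity (tid p <h> (E <h> E)).
    - rewrite EE1, wl_v by bd. nrm. reflexivity.
    - rewrite EE2, wl_v by bd. unfold M. nrm. reflexivity. }
  transitivity (Z <h> B).
  - rewrite (natl _ Z B), tB, sZ, <- (wr_comp _ Z d0 h), Z0, thc_idl.
    rewrite tvc_idl' by bd. rewrite <- (wl_comp _ v D1 B), cB, wl_v by bd. rewrite !wl_comp, vD0, vD2.
    rewrite <- (wl_comp _ t r B). reflexivity.
  - rewrite (natr _ Z B), tZ, sB, <- (wr_comp _ Z d1 h), Z1. reflexivity. Qed.

Lemma ThetaPhi {y : Ob C} (h : hom y b) (B : TC y O) : src B = comp1 d1 h -> tgt B = comp1 d0 h ->
  tid D1 <h> B = (tid D0 <h> B) <v> (tid D2 <h> B) -> tid s <h> B = tid h ->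
  Th h (tid r <h> B) = B.
Proof. intros sB tB cB uB.
  pose proof (ck_s0_d0 _ K) as sd0. pose proof (ck_s0_d1 _ K) as sd1.
  pose proof (ck_D1_d0 _ K) as D1d0. pose proof (ck_D1_d1 _ K) as D1d1.
  destruct (oc1K (comp1 d0 t) d1 (A' <h> tid p)) as (y' & y'd0 & y'd1 & y'A); try (bd; fail).
  destruct (po1K y' (comp1 d0 r)) as (w & wD2 & wD0). { bd. }
  assert (wD1 : comp1 w D1 = id1 O).
  { apply oc1uK; try (bd; fail).
    rewrite thc_idl, <- (wl_comp _ w D1 A), D1A, wl_v by bd. rewrite !wl_comp, wD0, wD2, y'A.
    rewrite <- (wl_comp _ d0 r A), rA. unfold A'. rewrite wr_v by bd.
    rewrite tvc_assoc by bd.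
    assert (H: tid d0 <h> (tid p <h> E) <v> A <h> tid l <h> tid p = A <v> (tid (comp1 d1 p) <h> E)).
    { rewrite wl_comp, wr_comp. transitivity (A <h> E). symmetry. apply natr.
      rewrite (natl _ A E). apply (f_equal (fun Z => Z <v> _)). apply thc_idr. }
    rewrite H. rewrite <- tvc_assoc by bd.
    assert (H2 : tid (comp1 d1 p) <h> E <v> tid d1 <h> N <h> tid p = tid (comp1 d1 p)).
    { rewrite <- (wl_comp _ d1 p E), <- thc_assoc, <- wl_v by bd. rewrite <- TP. apply thc_tid. }
    rewrite H2. apply tvc_idr'. bd. }
  destruct (oc2K (comp1 d1 s) y' A' (tid d1)) as (Z & sZ & tZ & Z0 & Z1); try (bd; fail).
  { rewrite <- (wl_comp _ d1 s A), sA, y'A, !thc_tid.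
    reflexivity. }
  assert (YB : tid y' <h> B = A' <h> tid h).
  { transitivity (Z <h> B).
    - rewrite (natr _ Z B), tZ, sB, <- (wr_comp _ Z d1 h), Z1, thc_tid. rewrite tvc_idr' by bd.
      reflexivity.
    - rewrite (natl _ Z B), tB, sZ, <- (wr_comp _ Z d0 h), Z0, <- (wl_comp _ d1 s B), uB, thc_tid.
      rewrite tvc_idr' by bd. reflexivity. }
  pose proof (f_equal (fun Z => tid w <h> Z) cB) as WB. simpl in WB.
  rewrite (wl_comp _ w D1 B), wD1, thc_idl, wl_v in WB by bd.
  rewrite (wl_comp _ w D0 B), (wl_comp _ w D2 B), wD0, wD2, YB in WB.
  unfold Th. rewrite wl_comp. symmetry. exact WB. Qed.

Local Notation AlgT' := (@AlgT C b (adj_T X) (adj_mult X) (adj_eta X)).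
Local Notation AlgMorT' := (@AlgMorT C b (adj_T X)).
Local Notation DescT' := (@DescT C e b p K).
Local Notation DescMorT' := (@DescMorT C e b p K).

Lemma T_mult : T (adj_mult X) = M.
Proof. unfold adj_mult. rewrite T_cast. reflexivity. Qed.

Lemma Desc_to_Alg {y : Ob C} (h : hom y b) (B : TC y O) : DescT' h B -> AlgT' h (tid r <h> B).
Proof. intros (sB & tB & cB & uB). unfold AlgT. rewrite T_mult. unfold adj_T.
  split; [bd|split; [bd|split]].
  - apply PhiAssoc; auto.
  - apply PhiUnit; auto. Qed.

Lemma src_Th {y : Ob C} (h : hom y b) (C0 : TC y b) : src C0 = comp1 t h -> src (Th h C0) = comp1 d1 h.
Proof. intro Hs. unfold Th. bd. Qed.
Lemma tgt_Th {y : Ob C} (h : hom y b) (C0 : TC y b) : src C0 = comp1 t h -> tgt C0 = h ->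
  tgt (Th h C0) = comp1 d0 h.
Proof. intros Hs Ht. unfold Th. bd. Qed.

Lemma Alg_to_Desc {y : Ob C} (h : hom y b) (C0 : TC y b) : AlgT' h C0 -> DescT' h (Th h C0).
Proof. unfold AlgT. rewrite T_mult. unfold adj_T. intros (sC & tC & aC & uC).
  split; [apply src_Th; auto|split; [apply tgt_Th; auto|split]].
  - apply ThCoc; auto.
  - apply ThUnit; auto. Qed.

Lemma DtoEM {L : Ob C} (d : hom L b) (PsiT : TC L O) :
  RepT C b O (@DescT C e b p K) (@DescMorT C e b p K) d PsiT ->
  RepT C b b (@AlgT C b (adj_T X) (adj_mult X) (adj_eta X)) (@AlgMorT C b (adj_T X)) d (tid r <h> PsiT).
Proof. intros (P1 & P2 & P3 & P4 & P5).
  assert (sP : src PsiT = comp1 d1 d).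
  { destruct (P1 L (id1 L)) as (s1 & _). rewrite src_thc, src_tid, !c1_idr in s1. exact s1. }
  assert (tP : tgt PsiT = comp1 d0 d).
  { destruct (P1 L (id1 L)) as (_ & t1 & _). rewrite tgt_thc, tgt_tid, !c1_idr in t1. exact t1. }
  assert (TP1 : forall y (g : hom y L), Th (comp1 d g) (tid r <h> (PsiT <h> tid g)) = PsiT <h> tid g).
  { intros y g. destruct (P1 y g) as (s1 & t1 & c1 & u1). apply ThetaPhi; auto. }
  split; [|split; [|split; [|split]]].
  - intros y g. rewrite <- thc_assoc. apply Desc_to_Alg. apply P1.
  - intros y h C0 HC. destruct (P2 y h (Th h C0) (Alg_to_Desc h C0 HC)) as (g & H1 & H2).
    exists g. split; auto. rewrite <- thc_assoc, H2. destruct HC as (sC & tC & _).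
    apply PhiTheta; auto.
  - intros y g g' E1 E2. apply P3; auto. rewrite <- TP1, <- (TP1 y g'), !thc_assoc, E2, E1. reflexivity.
  - intros y g g' Xi sX tX HX. apply P4; auto. unfold DescMorT.
    rewrite <- TP1, <- (TP1 y g). destruct (P1 y g) as (s1 & t1 & c1 & u1).
    destruct (P1 y g') as (s2 & t2 & c2 & u2).
    apply Lmor2; try (bd; fail). rewrite !thc_assoc. exact HX.
  - exact P5.
Qed.

Lemma EMtoD {L : Ob C} (u : hom L b) (muT : TC L b) :
  RepT C b b (@AlgT C b (adj_T X) (adj_mult X) (adj_eta X)) (@AlgMorT C b (adj_T X)) u muT ->
  RepT C b O (@DescT C e b p K) (@DescMorT C e b p K) u (Th u muT).
Proof. intros (P1 & P2 & P3 & P4 & P5).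
  assert (sP : src muT = comp1 t u).
  { destruct (P1 L (id1 L)) as (s1 & _). rewrite src_thc, src_tid, !c1_idr in s1. exact s1. }
  assert (tP : tgt muT = u).
  { destruct (P1 L (id1 L)) as (_ & t1 & _). rewrite tgt_thc, tgt_tid, !c1_idr in t1. exact t1. }
  assert (NT : forall y (g : hom y L), Th u muT <h> tid g = Th (comp1 u g) (muT <h> tid g)).
  { intros y g. symmetry. apply NatTh; auto. }
  assert (TP1 : forall y (g : hom y L), tid r <h> (Th u muT <h> tid g) = muT <h> tid g).
  { intros y g. rewrite NT. apply PhiTheta; bd. }
  split; [|split; [|split; [|split]]].
  - intros y g. rewrite NT. apply Alg_to_Desc. apply P1.
  - intros y h B HB. destruct (P2 y h (tid r <h> B) (Desc_to_Alg h B HB)) as (g & H1 & H2).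
    exists g. split; auto. rewrite NT, H2, H1. destruct HB as (sB & tB & cB & uB).
    apply ThetaPhi; auto.
  - intros y g g' E1 E2. apply P3; auto. rewrite <- TP1, <- (TP1 y g'), E2. reflexivity.
  - intros y g g' Xi sX tX HX. apply P4; auto. unfold AlgMorT.
    rewrite <- (TP1 y g'), <- (TP1 y g). symmetry.
    apply (Lmor1 (comp1 u g') (comp1 u g)); try (bd; fail).
    all: try (rewrite NT; first [apply src_Th | apply tgt_Th]; bd; fail). exact HX.
  - exact P5.
Qed.
End R.

Lemma r_ex : exists r : hom O b, comp1 r d0 = id1 b /\ comp1 r d1 = t /\ tid r <h> A = tid p <h> E.
Proof. apply oc1K; bd. Qed.

Lemma claim1 : Claim1 X K.
Proof.
  destruct r_ex as (r & rd0 & rd1 & rA).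
  assert (FtoRep : forall F : LaxDescFact K,
    RepT C b b (@AlgT C b (adj_T X) (adj_mult X) (adj_eta X)) (@AlgMorT C b (adj_T X))
      (ldf_d F) (tid r <h> T (ldf_Psi _ F))).
  { intro F. eapply DtoEM; eauto. apply Desc_Rep. apply ldf_is. }
  assert (FmuK : forall F : LaxDescFact K, (tid r <h> T (ldf_Psi _ F)) <h> tid (ldf_pH F) = tid p <h> E).
  { intro F. rewrite <- thc_assoc. pose proof (ldf_Psi_pH _ F) as H.
    change (T (ldf_Psi _ F) <h> tid (ldf_pH F) = A) in H. rewrite H. exact rA. }
  assert (GtoRep : forall G : EMFact X,
    RepT C b b (@AlgT C b (adj_T X) (adj_mult X) (adj_eta X)) (@AlgMorT C b (adj_T X))
      (emf_u G) (T (emf_mu _ G))).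
  { intro G. apply EM_Rep. apply emf_is. }
  assert (GmuK : forall G : EMFact X, T (emf_mu _ G) <h> tid (emf_k G) = tid p <h> E).
  { intro G. exact (emf_mu_k _ G). }
  split.
  - split.
    + intros [F]. constructor.
      assert (e1 : src (tid r <h> T (ldf_Psi _ F)) = comp1 (adj_T X) (ldf_d F)) by (unfold adj_T; bd).
      assert (e2 : tgt (tid r <h> T (ldf_Psi _ F)) = ldf_d F) by bd.
      refine (Build_EMFact C b e X (ldf_L F) (ldf_d F) (untc (tid r <h> T (ldf_Psi _ F)) e1 e2) _
        (ldf_pH F) (ldf_fact _ F) _).
      * apply EM_Rep. rewrite T_untc. apply FtoRep.
      * match goal with |- heq2 (hcomp ?a (id2 ?k)) (hcomp (id2 ?q) ?z) =>
          change (T a <h> tid k = tid q <h> T z) end.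
        rewrite T_untc. apply FmuK.
    + intros [G]. constructor.
      assert (e1 : src (Th (emf_u G) (T (emf_mu _ G))) = comp1 d1 (emf_u G)) by (apply src_Th; reflexivity).
      assert (e2 : tgt (Th (emf_u G) (T (emf_mu _ G))) = comp1 d0 (emf_u G)) by (apply tgt_Th; reflexivity).
      refine (Build_LaxDescFact C e b p K (emf_bT G) (emf_u G) (untc (Th (emf_u G) (T (emf_mu _ G))) e1 e2)
        _ (emf_k G) (emf_fact _ G) _).
      * apply Desc_Rep. rewrite T_untc. eapply EMtoD; eauto.
      * match goal with |- heq2 (hcomp ?a (id2 ?k)) ?z =>
          change (T a <h> tid k = T z) end.
        rewrite T_untc, <- NatTh by reflexivity. rewrite GmuK, (emf_fact _ G), <- rA.
        apply ThetaPhi; auto.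
        -- apply D1A.
        -- apply sA.
  - intros F G. eapply RepIso. apply FtoRep. apply GtoRep.
    rewrite (ldf_fact _ F), (emf_fact _ G). reflexivity.
    rewrite FmuK. symmetry. apply GmuK.
Qed.
End Main.

Section Co.
Variable C : TwoCat.

Lemma heq2_co_iff {a b : Ob C} {f g f' g' : hom a b} (x : @cell (co C) a b f g) (y : @cell (co C) a b f' g') :
  @heq2 (co C) a b f g f' g' x y <-> @heq2 C a b g f g' f' x y.
Proof. unfold heq2. split; intro H.
  - exact (f_equal (fun s : {st : hom a b * hom a b & @cell C a b (snd st) (fst st)} =>
       existT (fun st : hom a b * hom a b => @cell C a b (fst st) (snd st))
         (snd (projT1 s), fst (projT1 s)) (projT2 s)) H).
  - exact (f_equal (fun s : {st : hom a b * hom a b & @cell C a b (fst st) (snd st)} =>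
       existT (fun st : hom a b * hom a b => @cell C a b (snd st) (fst st))
         (snd (projT1 s), fst (projT1 s)) (projT2 s)) H).
Qed.

Lemma cast2_co {a b : Ob C} {f f' g g' : hom a b} (e1 : f = f') (e2 : g = g') (x : @cell (co C) a b f g) :
  @cast2 (co C) a b f f' g g' e1 e2 x = @cast2 C a b g g' f f' e2 e1 x.
Proof. destruct e1, e2. reflexivity. Qed.

Lemma cast2_pi {a b : Ob C} {f f' g g' : hom a b} (e1 e1' : f = f') (e2 e2' : g = g') (x : @cell C a b f g) :
  cast2 e1 e2 x = cast2 e1' e2' x.
Proof. rewrite (proof_irrelevance _ e1 e1'), (proof_irrelevance _ e2 e2'). reflexivity. Qed.

Lemma veq_co_iff {a b : Ob C} {f1 g1 f2 g2 f3 g3 : hom a b}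
    (w : @cell (co C) a b f1 g1) (x : @cell (co C) a b f2 g2) (y : @cell (co C) a b f3 g3) :
  @veq (co C) a b f1 g1 f2 g2 f3 g3 w x y <-> @veq C a b g1 f1 g3 f3 g2 f2 w y x.
Proof. split.
  - intros (m & x' & y' & H1 & H2 & H3). exists m, y', x'.
    apply heq2_co_iff in H1. apply heq2_co_iff in H2. apply heq2_co_iff in H3. auto.
  - intro H. exact (veq_co C a b _ _ _ _ _ _ w x y H).
Qed.

Variables (x y : Ob C) (f : hom x y) (K : CokernelDiagram f).
Local Notation d0 := (ck_d0 K).
Local Notation d1 := (ck_d1 K).
Local Notation al := (ck_alpha K).

Lemma oc_beta_co {z : Ob C} (h : hom (ck_O K) z) :
  @oc_beta (co C) x y (ck_O K) z f d1 d0 al h = @oc_beta C x y (ck_O K) z f d0 d1 al h.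
Proof. unfold oc_beta. rewrite cast2_co. apply cast2_pi. Qed.

Lemma oc_co : @IsOpcomma (co C) x y (ck_O K) f d1 d0 al.
Proof. destruct (ck_opcomma _ K) as [P1 P2]. split.
  - intros z h0 h1 beta. destruct (P1 z h1 h0 beta) as [h [Hh U]].
    apply triple_inv in Hh. destruct Hh as (e0 & e1 & e2).
    exists h. split.
    + unfold oc_triple. apply (triple_eq (co C)); auto.
      apply heq2_co_iff. rewrite oc_beta_co. exact e2.
    + intros h' Hh'. apply U. unfold oc_triple in Hh'. apply (triple_inv (co C)) in Hh'.
      destruct Hh' as (e0' & e1' & e2'). apply heq2_co_iff in e2'.
      rewrite oc_beta_co in e2'. apply triple_eq; auto.
  - intros z h h' xi0 xi1 H. simpl in H. rewrite !oc_beta_co in H.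
    destruct (P2 z h' h xi1 xi0 (eq_sym H)) as [xi [[X0 X1] U]].
    exists xi. split; [split; auto|]. intros xi' [Y0 Y1]. apply U. split; auto.
Qed.

Local Notation D0 := (ck_D0 K).
Local Notation D2 := (ck_D2 K).

Lemma po_co : @IsPushout2 (co C) _ _ _ _ d1 d0 D0 D2.
Proof. destruct (ck_pushout _ K) as (E & P1 & P2). split; [|split].
  - symmetry. exact E.
  - intros z k0 k1 e. destruct (P1 z k1 k0 (eq_sym e)) as [k [[H1 H2] U]].
    exists k. split; auto. intros k' [H3 H4]. apply U. auto.
  - intros z k k' xi0 xi1 H. apply heq2_co_iff in H.
    destruct (P2 z k' k xi1 xi0) as [xi [[H1 H2] U]].
    { symmetry. exact H. }
    exists xi. split; auto. intros xi' [H3 H4]. apply U. auto.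
Qed.

Definition coK : @CokernelDiagram (co C) x y f :=
  @Build_CokernelDiagram (co C) x y f (ck_O K) d1 d0 al oc_co (ck_P K) D2 D0 po_co (ck_D1 K)
    (ck_D1_d0 _ K) (ck_D1_d1 _ K)
    (proj2 (veq_co_iff _ _ _) (ck_D1_alpha _ K))
    (ck_s0 K) (ck_s0_d1 _ K) (ck_s0_d0 _ K)
    (proj2 (heq2_co_iff _ _) (ck_s0_alpha _ K)).

Lemma ld_co {L z : Ob C} (d : hom L y) (Psi : @cell C L (ck_O K) (comp1 d1 d) (comp1 d0 d)) (g : hom z L) :
  @ld_beta (co C) x y f coK L z d Psi g = @ld_beta C x y f K L z d Psi g.
Proof. unfold ld_beta. rewrite cast2_co. apply cast2_pi. Qed.

Lemma DescObj_co {z : Ob C} (h : hom z y) (beta : @cell C z (ck_O K) (comp1 d1 h) (comp1 d0 h)) :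
  @DescObj (co C) x y f coK z h beta <-> DescObj K h beta.
Proof. unfold DescObj. simpl. rewrite veq_co_iff, heq2_co_iff. tauto. Qed.

Lemma IsLD_co {L : Ob C} (d : hom L y) (Psi : @cell C L (ck_O K) (comp1 d1 d) (comp1 d0 d)) :
  @IsLaxDescObj (co C) x y f coK L d Psi <-> IsLaxDescObj K d Psi.
Proof. unfold IsLaxDescObj. split.
  - intros (P1 & P2 & P3). split; [|split].
    + intros z g. pose proof (P1 z g) as H. rewrite ld_co, DescObj_co in H. exact H.
    + intros z h beta Hb. rewrite <- DescObj_co in Hb. destruct (P2 z h beta Hb) as [g [Hg U]].
      exists g. rewrite ld_co in Hg. split; [exact Hg|].
      intros g' Hg'. apply U. rewrite ld_co. exact Hg'.
    + intros z g g' m Hm. destruct (P3 z g' g m) as [xi [Hxi U]].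
      { unfold DescMor in *. simpl. rewrite !ld_co. symmetry. exact Hm. }
      exists xi. split; auto.
  - intros (P1 & P2 & P3). split; [|split].
    + intros z g. rewrite DescObj_co, ld_co. apply P1.
    + intros z h beta Hb. rewrite DescObj_co in Hb. destruct (P2 z h beta Hb) as [g [Hg U]].
      exists g. split; [rewrite ld_co; exact Hg|].
      intros g' Hg'. apply U. rewrite ld_co in Hg'. exact Hg'.
    + intros z g g' m Hm. destruct (P3 z g' g m) as [xi [Hxi U]].
      { unfold DescMor in *. simpl in Hm. rewrite !ld_co in Hm. symmetry. exact Hm. }
      exists xi. split; auto.
Qed.

Definition ldf_to_co (F : LaxDescFact K) : @LaxDescFact (co C) x y f coK :=
  @Build_LaxDescFact (co C) x y f coK (ldf_L F) (ldf_d F) (ldf_Psi _ F)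
    (proj2 (IsLD_co _ _) (ldf_is _ F)) (ldf_pH F) (ldf_fact _ F)
    (proj2 (heq2_co_iff _ _) (ldf_Psi_pH _ F)).
Definition ldf_from_co (F : @LaxDescFact (co C) x y f coK) : LaxDescFact K :=
  @Build_LaxDescFact C x y f K (ldf_L F) (ldf_d F) (ldf_Psi _ F)
    (proj1 (IsLD_co _ _) (ldf_is _ F)) (ldf_pH F) (ldf_fact _ F)
    (proj1 (heq2_co_iff _ _) (ldf_Psi_pH _ F)).
End Co.

Lemma claim3 (C : TwoCat) (b e : Ob C) (X : Adjunction C b e) (K : CokernelDiagram (adj_l X)) :
  Claim3 X K.
Proof.
  pose proof (claim1 (co C) e b (adj_co X) (coK C b e (adj_l X) K)) as [H1 H2].
  split.
  - split.
    + intros [F]. apply H1. constructor. exact (ldf_to_co C b e (adj_l X) K F).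
    + intros HG. destruct (proj2 H1 HG) as [F']. constructor. exact (ldf_from_co C b e (adj_l X) K F').
  - intros F G. exact (H2 (ldf_to_co C b e (adj_l X) K F) G).
Qed.

Theorem theorem4p11 (A : TwoCat) (b e : Ob A) (X : Adjunction A b e) :
  (forall K : CokernelDiagram (adj_p X), Claim1 X K) /\
  (forall K : KernelDiagram (adj_l X), Claim2 X K) /\
  (forall K : CokernelDiagram (adj_l X), Claim3 X K) /\
  (forall K : KernelDiagram (adj_p X), Claim4 X K).
Proof.
  split; [|split; [|split]].
  - intro K. apply claim1.
  - intro K. exact (claim1 (op A) b e (adj_op X) K).
  - intro K. apply claim3.
  - intro K. exact (claim3 (op A) b e (adj_op X) K).
Qed.
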